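(* Let $f:\mathbb N\to(0,\infty)$ satisfy $f(n)\to\infty$. There exists a critical offspring distribution $\mu$ such that \[ \limsup_{n\to\infty}\mathbf P\big(\mathsf{Height}(\mathrm T_n)<f(n)\ln n\big)=1\qquad\text{and}\qquad\limsup_{n\to\infty}\mathbf P\big(\mathsf{Width}(\mathrm T_n)>n/f(n)\big)=1, \] where the limits superior are taken along integers $n$ with $\mathbf P(|\mathrm T|=n)>0$.
   Context: An offspring distribution is a probability measure $\mu=(\mu_k)_{k\ge 0}$ on $\mathbb Z_+$; it is critical if $\sum_k k\mu_k=1$. A $\mu$-Bienaymé tree $\mathrm T=\mathrm T(\mu)$ is the family tree of a Galton–Watson process with offspring distribution $\mu$ started from one individual; $\mathrm T_n$ is $\mathrm T$ conditioned on having exactly $n$ vertices (defined when $\mathbf P(|\mathrm T|=n)>0$). $\mathsf{Height}$ is the maximal distance of a vertex from the root and $\mathsf{Width}$ is the maximal number of vertices at a common distance from the root. *)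

(* Defs.v *)
From Stdlib Require Import Reals List Arith ClassicalEpsilon.
Import ListNotations.
Open Scope R_scope.

Inductive ptree : Type := Node : list ptree -> ptree.

Fixpoint tsize (t : ptree) : nat :=
  match t with
  | Node ts => S ((fix ss (l : list ptree) : nat :=
                     match l with [] => O | c :: l' => (tsize c + ss l')%nat end) ts)
  end.

Fixpoint height (t : ptree) : nat :=
  match t with
  | Node ts => (fix hs (l : list ptree) : nat :=
                  match l with [] => O | c :: l' => Nat.max (S (height c)) (hs l') end) ts
  end.

Fixpoint gen (t : ptree) (d : nat) : nat :=
  match t, d with
  | Node _, O => 1%nat
  | Node ts, S d' => (fix gs (l : list ptree) : nat :=
                        match l with [] => O | c :: l' => (gen c d' + gs l')%nat end) ts
  end.

(* Width: maximal number of vertices at a common distance from the root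
   (all generations beyond the height are empty). *)
Definition width (t : ptree) : nat :=
  fold_right Nat.max O (map (gen t) (seq 0 (S (height t)))).

(* Probability that the mu-Bienaymé tree equals the plane tree t:
   product over vertices v of mu(k_v(t)). *)
Fixpoint weight (mu : nat -> R) (t : ptree) : R :=
  match t with
  | Node ts => mu (length ts) *
      (fix ws (l : list ptree) : R :=
         match l with [] => 1 | c :: l' => weight mu c * ws l' end) ts
  end.

(* forests fuel m : all ordered forests (lists of plane trees) with
   exactly m vertices in total (fuel m suffices). *)
Fixpoint forests (fuel m : nat) : list (list ptree) :=
  match fuel with
  | O => match m with O => [[]] | S _ => [] end
  | S fu =>
      match m with
      | O => [[]]
      | S _ =>
          flat_map (fun k =>
            flat_map (fun f => map (fun r => Node f :: r) (forests fu (m - k)))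
                     (forests fu (k - 1)))
            (seq 1 m)
      end
  end.

Definition trees (n : nat) : list ptree :=
  match n with O => [] | S m => map Node (forests m m) end.

Definition Psize (mu : nat -> R) (n : nat) : R :=
  fold_right Rplus 0 (map (weight mu) (trees n)).

(* P(T_n satisfies A) = P(|T| = n and A(T)) / P(|T| = n) *)
Definition Pcond (mu : nat -> R) (n : nat) (A : ptree -> Prop) : R :=
  fold_right Rplus 0
    (map (fun t => if excluded_middle_informative (A t) then weight mu t else 0)
         (trees n)) / Psize mu n.

Definition critical_offspring (mu : nat -> R) : Prop :=
  (forall k, 0 <= mu k) /\ infinite_sum mu 1 /\
  infinite_sum (fun k => INR k * mu k) 1.

(* limsup_{n -> oo, P(|T|=n)>0} P(T_n satisfies A n) = 1.
   Since these probabilities are <= 1, this means: infinitely many admissible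
   n, and for every eps > 0 and N there is an admissible n >= N with
   probability > 1 - eps. *)
Definition limsup_one (mu : nat -> R) (A : nat -> ptree -> Prop) : Prop :=
  (forall N, exists n, (N <= n)%nat /\ 0 < Psize mu n) /\
  (forall eps, 0 < eps -> forall N, exists n,
      (N <= n)%nat /\ 0 < Psize mu n /\ 1 - eps < Pcond mu n (A n)).

(* Main.v *)
Require Import Defs.
From Stdlib Require Import Reals List Arith Lia Lra ZArith ClassicalEpsilon.
Import ListNotations.
Open Scope R_scope.

Definition ptree_ind2 (P : ptree -> Prop)
  (H : forall ts, Forall P ts -> P (Node ts)) : forall t, P t :=
  fix F t := match t with Node ts => H ts
    ((fix G l := match l return Forall P l with
       | [] => Forall_nil _ | c :: l' => Forall_cons c (F c) (G l') end) ts) end.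

Fixpoint fsize (l : list ptree) : nat :=
  match l with [] => O | c :: l' => (tsize c + fsize l')%nat end.
Fixpoint hmax (l : list ptree) : nat :=
  match l with [] => O | c :: l' => Nat.max (S (height c)) (hmax l') end.
Fixpoint gsum (l : list ptree) (d : nat) : nat :=
  match l with [] => O | c :: l' => (gen c d + gsum l' d)%nat end.
Fixpoint wprod (mu : nat -> R) (l : list ptree) : R :=
  match l with [] => 1 | c :: l' => weight mu c * wprod mu l' end.

Lemma tsize_Node ts : tsize (Node ts) = S (fsize ts).
Proof. simpl; induction ts; simpl; try rewrite IHts; reflexivity. Qed.
Lemma height_Node ts : height (Node ts) = hmax ts.
Proof. simpl; induction ts; simpl; try rewrite IHts; reflexivity. Qed.
Lemma gen_Node0 ts : gen (Node ts) 0 = 1%nat.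
Proof. reflexivity. Qed.
Lemma gen_NodeS ts d : gen (Node ts) (S d) = gsum ts d.
Proof. simpl; induction ts; simpl; try rewrite IHts; reflexivity. Qed.
Lemma weight_Node mu ts : weight mu (Node ts) = mu (length ts) * wprod mu ts.
Proof. simpl; f_equal; induction ts; simpl; try rewrite IHts; reflexivity. Qed.

Fixpoint maxdeg (t : ptree) : nat :=
  match t with Node ts => Nat.max (length ts)
    ((fix md (l : list ptree) : nat := match l with [] => O | c :: l' => Nat.max (maxdeg c) (md l') end) ts) end.
Fixpoint mdl (l : list ptree) : nat :=
  match l with [] => O | c :: l' => Nat.max (maxdeg c) (mdl l') end.
Lemma maxdeg_Node ts : maxdeg (Node ts) = Nat.max (length ts) (mdl ts).
Proof. simpl; induction ts; simpl; try rewrite IHts; reflexivity. Qed.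

Lemma hmax_cons c l : hmax (c :: l) = Nat.max (S (height c)) (hmax l). Proof. reflexivity. Qed.
Lemma mdl_cons c l : mdl (c :: l) = Nat.max (maxdeg c) (mdl l). Proof. reflexivity. Qed.
Lemma fsize_cons c l : fsize (c :: l) = (tsize c + fsize l)%nat. Proof. reflexivity. Qed.
Lemma gsum_cons c l d : gsum (c :: l) d = (gen c d + gsum l d)%nat. Proof. reflexivity. Qed.
Lemma wprod_cons mu c l : wprod mu (c :: l) = weight mu c * wprod mu l. Proof. reflexivity. Qed.
Lemma fsize_app l1 l2 : fsize (l1 ++ l2) = (fsize l1 + fsize l2)%nat.
Proof. induction l1; simpl; lia. Qed.

Lemma height_lt_size t : (height t < tsize t)%nat.
Proof.
  induction t as [ts IH] using ptree_ind2.
  rewrite height_Node, tsize_Node. induction IH; [simpl; lia|].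
  rewrite hmax_cons, fsize_cons. lia.
Qed.

Lemma maxdeg_lt_size t : (maxdeg t < tsize t)%nat.
Proof.
  induction t as [ts IH] using ptree_ind2.
  rewrite maxdeg_Node, tsize_Node.
  assert (length ts <= fsize ts /\ mdl ts <= fsize ts)%nat.
  { induction IH; [simpl; lia|]. rewrite mdl_cons, fsize_cons. simpl length.
    assert (1 <= tsize x)%nat by (destruct x; rewrite tsize_Node; lia). lia. }
  lia.
Qed.

Lemma gen_pos_height t d : (0 < gen t d)%nat -> (d <= height t)%nat.
Proof.
  revert d. induction t as [ts IH] using ptree_ind2. intros [|d] H; [lia|].
  rewrite gen_NodeS in H. rewrite height_Node.
  induction IH; [simpl in *; lia|]. rewrite gsum_cons in H. rewrite hmax_cons.
  destruct (gen x d) eqn:E. - simpl in H. specialize (IHIH H). lia.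
  - assert (d <= height x)%nat by (apply H0; lia). lia.
Qed.

Lemma fold_max_ge l x : In x l -> (x <= fold_right Nat.max O l)%nat.
Proof. induction l; simpl; [tauto|]. intros [->|H]; [lia|]. specialize (IHl H). lia. Qed.

Lemma gen_le_width t d : (gen t d <= width t)%nat.
Proof.
  destruct (gen t d) eqn:E; [lia|].
  assert (d <= height t)%nat by (apply gen_pos_height; lia).
  unfold width. rewrite <- E. apply fold_max_ge. apply in_map. apply in_seq. lia.
Qed.

Lemma maxdeg_gen t : exists d, (maxdeg t <= gen t d)%nat.
Proof.
  induction t as [ts IH] using ptree_ind2. rewrite maxdeg_Node.
  assert (Hl : (length ts <= gen (Node ts) 1)%nat).
  { rewrite gen_NodeS. clear IH. induction ts; simpl; [lia|]. destruct a; simpl. lia. }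
  assert (Hm : exists d, (mdl ts <= gen (Node ts) (S d))%nat).
  { clear Hl. induction IH. exists O; simpl; lia.
    destruct H as [d1 H1]. destruct IHIH as [d2 H2].
    rewrite gen_NodeS in *. rewrite mdl_cons.
    destruct (Nat.le_ge_cases (maxdeg x) (mdl l)).
    - exists d2. rewrite gen_NodeS, gsum_cons. lia.
    - exists d1. rewrite gen_NodeS, gsum_cons. pose proof (gen_Node0 []). destruct x.
      destruct d1.  rewrite gen_Node0 in *. lia. rewrite gen_NodeS in *. lia. }
  destruct Hm as [d Hd]. destruct (Nat.le_ge_cases (length ts) (mdl ts)).
  - exists (S d). lia.
  - exists 1%nat. lia.
Qed.

Lemma maxdeg_le_width t : (maxdeg t <= width t)%nat.
Proof. destruct (maxdeg_gen t) as [d H]. pose proof (gen_le_width t d). lia. Qed.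

Lemma forests_SS fu m : forests (S fu) (S m) =
  flat_map (fun k =>
    flat_map (fun f => map (fun r => Node f :: r) (forests fu (S m - k)))
             (forests fu (k - 1))) (seq 1 (S m)).
Proof. reflexivity. Qed.

Lemma forests_sound fu m F : In F (forests fu m) -> fsize F = m.
Proof.
  revert m F. induction fu as [|fu IH]; intros m F H.
  - destruct m; simpl in H; [destruct H as [<-|[]]; reflexivity|destruct H].
  - destruct m as [|m']; [simpl in H; destruct H as [<-|[]]; reflexivity|].
    rewrite forests_SS in H. apply in_flat_map in H. destruct H as [k [Hk H]]. apply in_seq in Hk.
    apply in_flat_map in H. destruct H as [f [Hf H]]. apply in_map_iff in H.
    destruct H as [r [<- Hr]]. apply IH in Hf. apply IH in Hr.
    rewrite fsize_cons, tsize_Node. lia.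
Qed.

Lemma forests_complete fu m F : fsize F = m -> (m <= fu)%nat -> In F (forests fu m).
Proof.
  revert m F. induction fu as [|fu IH]; intros m F H1 H2.
  - destruct F as [|c F]. simpl in H1. subst. simpl. auto.
    rewrite fsize_cons in H1. destruct c. rewrite tsize_Node in H1. lia.
  - destruct F as [|c F]. simpl in H1. subst. destruct fu; simpl; auto.
    destruct c as [f]. rewrite fsize_cons, tsize_Node in H1.
    destruct m as [|m']; [lia|]. rewrite forests_SS.
    apply in_flat_map. exists (S (fsize f)). split. apply in_seq. lia.
    apply in_flat_map. exists f. split. apply IH. lia. lia.
    apply in_map_iff. exists F. split; auto. apply IH; lia.
Qed.

Lemma NoDup_flat_map {A B} (g : A -> list B) (L : list A) :
  NoDup L -> (forall x, In x L -> NoDup (g x)) ->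
  (forall x y z, In x L -> In y L -> In z (g x) -> In z (g y) -> x = y) ->
  NoDup (flat_map g L).
Proof.
  induction L as [|a L IH]; intros HN Hg Hd; simpl. constructor.
  inversion HN; subst. apply NoDup_app.
  - apply Hg; simpl; auto.
  - apply IH; auto. intros; apply Hg; simpl; auto. intros; eapply Hd; simpl; eauto.
  - intros z Hz1 Hz2. apply in_flat_map in Hz2. destruct Hz2 as [y [Hy Hz2]].
    assert (a = y) by (eapply Hd; simpl; eauto). subst. contradiction.
Qed.

Lemma NoDup_map_inj {A B} (g : A -> B) L : (forall x y, g x = g y -> x = y) -> NoDup L -> NoDup (map g L).
Proof.
  intros Hi HN. induction HN; simpl; constructor; auto.
  intro H'. apply in_map_iff in H'. destruct H' as [y [E Hy]]. apply Hi in E. subst. auto.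
Qed.

Lemma forests_NoDup fu m : NoDup (forests fu m).
Proof.
  revert m. induction fu as [|fu IH]; intros m.
  - destruct m; simpl; repeat constructor; auto.
  - destruct m as [|m']; [simpl; repeat constructor; auto|]. rewrite forests_SS.
    apply NoDup_flat_map. apply seq_NoDup.
    + intros k _. apply NoDup_flat_map. apply IH.
      * intros f _. apply NoDup_map_inj. intros x y E; injection E; auto. apply IH.
      * intros f1 f2 z _ _ H1 H2. apply in_map_iff in H1, H2.
        destruct H1 as [r1 [<- _]]. destruct H2 as [r2 [E _]]. injection E; auto.
    + intros k1 k2 z Hk1 Hk2 H1 H2. apply in_seq in Hk1, Hk2.
      apply in_flat_map in H1, H2. destruct H1 as [f1 [Hf1 H1]]. destruct H2 as [f2 [Hf2 H2]].
      apply in_map_iff in H1, H2. destruct H1 as [r1 [<- _]]. destruct H2 as [r2 [E _]].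
      injection E; intros _ ->. apply forests_sound in Hf1, Hf2. lia.
Qed.

Lemma trees_NoDup n : NoDup (trees n).
Proof.
  destruct n; simpl. constructor. apply NoDup_map_inj. intros x y E; injection E; auto.
  apply forests_NoDup.
Qed.

Lemma trees_sound n t : In t (trees n) -> tsize t = n.
Proof.
  destruct n; simpl; [tauto|]. intros H. apply in_map_iff in H. destruct H as [F [<- H]].
  apply forests_sound in H. rewrite tsize_Node. lia.
Qed.

Lemma trees_complete t : In t (trees (tsize t)).
Proof.
  destruct t as [F]. rewrite tsize_Node. simpl. apply in_map. apply forests_complete; auto.
Qed.

Definition lsum {A} (f : A -> R) (L : list A) : R := fold_right (fun x acc => f x + acc) 0 L.

Lemma lsum_nil {A} (f : A -> R) : lsum f [] = 0. Proof. reflexivity. Qed.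
Lemma lsum_cons {A} (f : A -> R) x L : lsum f (x :: L) = f x + lsum f L. Proof. reflexivity. Qed.
Lemma lsum_app {A} (f : A -> R) L1 L2 : lsum f (L1 ++ L2) = lsum f L1 + lsum f L2.
Proof. induction L1; simpl; [ring|]. unfold lsum in *; simpl; rewrite IHL1; ring. Qed.
Lemma lsum_map {A B} (f : B -> R) (g : A -> B) L : lsum f (map g L) = lsum (fun x => f (g x)) L.
Proof. induction L; simpl; auto. unfold lsum in *; simpl; rewrite IHL; ring. Qed.
Lemma lsum_flat_map {A B} (f : B -> R) (g : A -> list B) L :
  lsum f (flat_map g L) = lsum (fun x => lsum f (g x)) L.
Proof. induction L; simpl; auto. rewrite lsum_app, IHL. reflexivity. Qed.
Lemma lsum_ext {A} (f g : A -> R) L : (forall x, In x L -> f x = g x) -> lsum f L = lsum g L.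
Proof. induction L; intros H; auto. rewrite !lsum_cons. f_equal. apply H; simpl; auto.
  apply IHL; intros; apply H; simpl; auto. Qed.
Lemma lsum_le {A} (f g : A -> R) L : (forall x, In x L -> f x <= g x) -> lsum f L <= lsum g L.
Proof. induction L; intros H; unfold lsum in *; simpl; [lra|].
  assert (f a <= g a) by (apply H; simpl; auto). assert (fold_right (fun x acc => f x + acc) 0 L <= fold_right (fun x acc => g x + acc) 0 L) by (apply IHL; intros; apply H; simpl; auto). lra. Qed.
Lemma lsum_nonneg {A} (f : A -> R) L : (forall x, In x L -> 0 <= f x) -> 0 <= lsum f L.
Proof. intros H. replace 0 with (lsum (fun _ => 0) L). apply lsum_le; auto.
  induction L; auto. unfold lsum in *; simpl. rewrite IHL. ring. intros; apply H; simpl; auto. Qed.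
Lemma lsum_scal {A} (f : A -> R) c L : lsum (fun x => c * f x) L = c * lsum f L.
Proof. induction L; unfold lsum in *; simpl; [ring|]. rewrite IHL; ring. Qed.
Lemma lsum_plus {A} (f g : A -> R) L : lsum (fun x => f x + g x) L = lsum f L + lsum g L.
Proof. induction L; unfold lsum in *; simpl; [ring|]. rewrite IHL; ring. Qed.
Lemma lsum_minus {A} (f g : A -> R) L : lsum (fun x => f x - g x) L = lsum f L - lsum g L.
Proof. induction L; unfold lsum in *; simpl; [ring|]. rewrite IHL; ring. Qed.
Lemma fold_Rplus_map {A} (g : A -> R) L : fold_right Rplus 0 (map g L) = lsum g L.
Proof. induction L; simpl; auto. rewrite IHL; reflexivity. Qed.

Lemma lsum_incl {A} (g h : A -> R) L M :
  NoDup L -> (forall x, In x L -> g x <> 0 -> In x M) -> (forall x, 0 <= g x) ->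
  (forall x, In x M -> g x <= h x) -> (forall x, 0 <= h x) -> lsum g L <= lsum h M.
Proof.
  intros HN. revert M. induction HN as [|x L Hx HN IH]; intros M Hin Hg Hgh Hh.
  - simpl. apply lsum_nonneg; auto.
  - rewrite lsum_cons. destruct (Req_dec (g x) 0) as [E|E].
    + rewrite E, Rplus_0_l. apply IH; auto. intros; apply Hin; simpl; auto.
    + assert (HxM : In x M) by (apply Hin; simpl; auto).
      destruct (in_split _ _ HxM) as [M1 [M2 ->]].
      rewrite lsum_app, lsum_cons.
      assert (lsum g L <= lsum h (M1 ++ M2)).
      { apply IH; auto.
        - intros y Hy Hgy. assert (In y (M1 ++ x :: M2)) by (apply Hin; simpl; auto).
          apply in_app_or in H. apply in_or_app. destruct H as [H|[H|H]]; auto. subst. contradiction.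
        - intros y Hy. apply Hgh. apply in_app_or in Hy. apply in_or_app. simpl. tauto. }
      rewrite lsum_app in H.
      assert (g x <= h x) by (apply Hgh; apply in_or_app; simpl; auto). lra.
Qed.

Fixpoint cart {A} (L : list A) (k : nat) : list (list A) :=
  match k with O => [[]] | S k => flat_map (fun x => map (cons x) (cart L k)) L end.

Lemma cart_length {A} (L : list A) k F : In F (cart L k) -> length F = k.
Proof. revert F; induction k; simpl; intros F H. destruct H as [<-|[]]; auto.
  apply in_flat_map in H. destruct H as [x [_ H]]. apply in_map_iff in H.
  destruct H as [F' [<- H]]. simpl. f_equal; auto. Qed.

Lemma cart_complete {A} (L : list A) F : (forall x, In x F -> In x L) -> In F (cart L (length F)).
Proof. induction F; simpl; intros H; auto. apply in_flat_map. exists a. split; auto.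
  apply in_map. apply IHF. auto. Qed.

Lemma cart_NoDup {A} (L : list A) k : NoDup L -> NoDup (cart L k).
Proof. intros HN. induction k; simpl. repeat constructor; auto.
  apply NoDup_flat_map; auto.
  - intros x _. apply NoDup_map_inj; auto. intros a b E; injection E; auto.
  - intros x y z _ _ H1 H2. apply in_map_iff in H1, H2. destruct H1 as [a [<- _]].
    destruct H2 as [b [E _]]. injection E; auto.
Qed.

Definition prodl {A} (phi : A -> R) (F : list A) : R := fold_right (fun x acc => phi x * acc) 1 F.
Fixpoint sp {A} (psi phi : A -> R) (F : list A) : R :=
  match F with [] => 0 | x :: F' => psi x * prodl phi F' + phi x * sp psi phi F' end.

Lemma lsum_cart_prod {A} (phi : A -> R) L k : lsum (prodl phi) (cart L k) = (lsum phi L) ^ k.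
Proof.
  induction k; simpl. unfold lsum, prodl; simpl; ring.
  rewrite lsum_flat_map. rewrite <- IHk. rewrite Rmult_comm, <- lsum_scal.
  apply lsum_ext. intros x _. rewrite lsum_map. rewrite Rmult_comm, <- lsum_scal.
  apply lsum_ext. intros; reflexivity.
Qed.

Lemma lsum_cart_sp {A} (psi phi : A -> R) L k :
  lsum (sp psi phi) (cart L k) = INR k * (lsum phi L) ^ (pred k) * lsum psi L.
Proof.
  induction k; simpl. unfold lsum; simpl; ring.
  rewrite lsum_flat_map.
  transitivity (lsum (fun x => psi x * (lsum phi L)^k + phi x * (INR k * lsum phi L ^ pred k * lsum psi L)) L).
  - apply lsum_ext. intros x _. rewrite lsum_map. simpl.
    rewrite lsum_plus, lsum_scal, lsum_scal, lsum_cart_prod, IHk. reflexivity.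
  - rewrite lsum_plus. rewrite (lsum_ext _ (fun x => (lsum phi L ^ k) * psi x)) by (intros; ring).
    rewrite (lsum_ext (fun x => phi x * _) (fun x => (INR k * lsum phi L ^ pred k * lsum psi L) * phi x)) by (intros; ring).
    rewrite !lsum_scal. destruct k. simpl. ring.
    rewrite S_INR. simpl pred. simpl. ring.
Qed.

Fixpoint Tenum (D H : nat) : list ptree :=
  match H with O => [Node []]
  | S H => flat_map (fun l => map Node (cart (Tenum D H) l)) (seq 0 D) end.

Lemma Tenum_NoDup D H : NoDup (Tenum D H).
Proof.
  induction H; simpl. repeat constructor; auto.
  apply NoDup_flat_map. apply seq_NoDup.
  - intros l _. apply NoDup_map_inj. intros x y E; injection E; auto. apply cart_NoDup; auto.
  - intros l1 l2 z _ _ H1 H2. apply in_map_iff in H1, H2. destruct H1 as [F1 [<- H1]].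
    destruct H2 as [F2 [E H2]]. injection E; intros ->. apply cart_length in H1, H2. lia.
Qed.

Lemma hmax_le l H : (hmax l <= S H)%nat -> forall c, In c l -> (height c <= H)%nat.
Proof. induction l; [simpl; tauto|]. rewrite hmax_cons. intros Hl c [<-|Hc]. lia. apply IHl; auto; lia. Qed.
Lemma mdl_le l D : (mdl l < D)%nat -> forall c, In c l -> (maxdeg c < D)%nat.
Proof. induction l; [simpl; tauto|]. rewrite mdl_cons. intros Hl c [<-|Hc]. lia. apply IHl; auto; lia. Qed.

Lemma Tenum_complete D H t : (height t <= H)%nat -> (maxdeg t < D)%nat -> In t (Tenum D H).
Proof.
  revert t. induction H as [|H IH]; intros [F] Hh Hd; rewrite height_Node in Hh; rewrite maxdeg_Node in Hd.
  - destruct F. simpl; auto. rewrite hmax_cons in Hh. lia.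
  - simpl. apply in_flat_map. exists (length F). split. apply in_seq. lia.
    apply in_map. apply cart_complete. intros c Hc. apply IH.
    eapply hmax_le; eauto. eapply mdl_le; eauto. lia.
Qed.

Lemma Tenum_sum D H (phi : ptree -> R) :
  lsum phi (Tenum D (S H)) = lsum (fun l => lsum (fun F => phi (Node F)) (cart (Tenum D H) l)) (seq 0 D).
Proof. simpl. rewrite lsum_flat_map. apply lsum_ext. intros. apply lsum_map. Qed.

Lemma wprod_prodl mu F : wprod mu F = prodl (weight mu) F.
Proof. induction F; simpl; auto. rewrite IHF; reflexivity. Qed.

Lemma weight_nonneg mu t : (forall k, 0 <= mu k) -> 0 <= weight mu t.
Proof.
  intros Hmu. induction t as [F IH] using ptree_ind2. rewrite weight_Node.
  apply Rmult_le_pos; auto. rewrite wprod_prodl. induction IH; simpl. lra.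
  apply Rmult_le_pos; auto.
Qed.

Lemma prodl_nonneg {A} (phi : A -> R) F : (forall x, 0 <= phi x) -> 0 <= prodl phi F.
Proof. intros H; induction F; simpl; [lra|]. apply Rmult_le_pos; auto. Qed.

Lemma pow_le_mono x y n : 0 <= x -> x <= y -> x ^ n <= y ^ n.
Proof. intros; apply pow_incr; auto. Qed.

Lemma prodl_wz mu z F : prodl (fun t => weight mu t * z ^ tsize t) F = prodl (weight mu) F * z ^ fsize F.
Proof. induction F. simpl. ring. unfold prodl in *; simpl. rewrite IHF, pow_add. ring. Qed.

Lemma Tenum_gf mu D z u : (1 <= D)%nat -> (forall k, 0 <= mu k) -> 0 < z -> 0 <= u ->
  z * lsum (fun l => mu l * u ^ l) (seq 0 D) <= u ->
  forall H, lsum (fun t => weight mu t * z ^ tsize t) (Tenum D H) <= u.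
Proof.
  intros HD Hmu Hz Hu Hfix H. induction H.
  - cbn [Tenum]. rewrite lsum_cons, lsum_nil.
    rewrite weight_Node, tsize_Node. simpl (length _). simpl (wprod _ _). simpl (fsize _).
    eapply Rle_trans; [|apply Hfix].
    destruct D; [lia|]. simpl seq. rewrite lsum_cons. simpl pow.
    assert (0 <= lsum (fun l => mu l * u ^ l) (seq 1 D)).
    { apply lsum_nonneg; intros; apply Rmult_le_pos; auto. apply pow_le; auto. }
    nra.
  - rewrite Tenum_sum. eapply Rle_trans; [|apply Hfix]. rewrite <- lsum_scal.
    apply lsum_le. intros l Hl.
    rewrite (lsum_ext _ (fun F => (z * mu l) * prodl (fun t => weight mu t * z ^ tsize t) F)).
    + rewrite lsum_scal, lsum_cart_prod.
      assert (0 <= lsum (fun t => weight mu t * z ^ tsize t) (Tenum D H)).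
      { apply lsum_nonneg; intros; apply Rmult_le_pos; [apply weight_nonneg; auto|apply pow_le; lra]. }
      assert (0 <= z * mu l) by (apply Rmult_le_pos; auto; lra).
      rewrite Rmult_assoc. apply Rmult_le_compat_l. lra.
      apply Rmult_le_compat_l; auto. apply pow_le_mono; auto.
    + intros F HF. apply cart_length in HF. rewrite weight_Node, tsize_Node, wprod_prodl, prodl_wz, HF.
      simpl. ring.
Qed.

Lemma U_le1 mu D H : (1 <= D)%nat -> (forall k, 0 <= mu k) ->
  lsum mu (seq 0 D) <= 1 -> lsum (weight mu) (Tenum D H) <= 1.
Proof.
  intros HD Hmu HS. rewrite (lsum_ext _ (fun t => weight mu t * 1 ^ tsize t)) by (intros; rewrite pow1; ring).
  apply Tenum_gf; auto; try lra. rewrite Rmult_1_l.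
  rewrite (lsum_ext _ mu); auto. intros; rewrite pow1; ring.
Qed.

Lemma U_nonneg mu D H : (forall k, 0 <= mu k) -> 0 <= lsum (weight mu) (Tenum D H).
Proof. intros. apply lsum_nonneg; intros; apply weight_nonneg; auto. Qed.

Lemma sp_gen mu h F : INR (gsum F h) * prodl (weight mu) F =
  sp (fun t => weight mu t * INR (gen t h)) (weight mu) F.
Proof. induction F. simpl. ring. rewrite gsum_cons. simpl sp. rewrite <- IHF.
  unfold prodl; simpl. rewrite plus_INR. ring. Qed.

Lemma sp_size mu F : INR (fsize F) * prodl (weight mu) F =
  sp (fun t => weight mu t * INR (tsize t)) (weight mu) F.
Proof. induction F. simpl. ring. rewrite fsize_cons. simpl sp. rewrite <- IHF.
  unfold prodl; simpl. rewrite plus_INR. ring. Qed.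

Lemma lsum_seq_first (g : nat -> R) D : (1 <= D)%nat -> (forall k, 0 <= g k) -> g O <= lsum g (seq 0 D).
Proof. intros HD Hg. destruct D; [lia|]. simpl seq. rewrite lsum_cons.
  assert (0 <= lsum g (seq 1 D)) by (apply lsum_nonneg; auto). lra. Qed.

Lemma G_bound mu D m : (1 <= D)%nat -> (forall k, 0 <= mu k) -> 0 <= m ->
  lsum mu (seq 0 D) <= 1 -> lsum (fun l => INR l * mu l) (seq 0 D) <= m ->
  forall H h, lsum (fun t => weight mu t * INR (gen t h)) (Tenum D H) <= m ^ h.
Proof.
  intros HD Hmu Hm HS0 HS1 H. induction H as [|H IH]; intros h.
  - cbn [Tenum]. rewrite lsum_cons, lsum_nil, weight_Node. simpl (length _). simpl (wprod _ _).
    destruct h. rewrite gen_Node0. simpl.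
    pose proof (lsum_seq_first mu D HD Hmu). lra.
    rewrite gen_NodeS. change (gsum [] h) with 0%nat. simpl INR.
    pose proof (pow_le m (S h) Hm). lra.
  - destruct h.
    + rewrite (lsum_ext _ (weight mu)). apply U_le1; auto. intros x _.
      destruct x; rewrite gen_Node0; simpl; ring.
    + rewrite Tenum_sum.
      rewrite (lsum_ext _ (fun l => (INR l * mu l) * (lsum (weight mu) (Tenum D H) ^ pred l *
                     lsum (fun t => weight mu t * INR (gen t h)) (Tenum D H)))).
      * eapply Rle_trans. apply lsum_le. intros l _.
        apply Rmult_le_compat_l. apply Rmult_le_pos; auto. apply pos_INR.
        apply Rmult_le_compat_r. apply lsum_nonneg; intros; apply Rmult_le_pos; [apply weight_nonneg; auto|apply pos_INR].
        apply pow_le_mono with (y := 1) (n := pred l). apply U_nonneg; auto. apply U_le1; auto.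
        rewrite (lsum_ext _ (fun l => (lsum (fun t => weight mu t * INR (gen t h)) (Tenum D H)) * (INR l * mu l))) by (intros; rewrite pow1; ring).
        rewrite (lsum_scal (fun l => INR l * mu l)). simpl. rewrite Rmult_comm. apply Rmult_le_compat; auto.
        apply lsum_nonneg; intros; apply Rmult_le_pos; [apply pos_INR|auto].
        apply lsum_nonneg; intros; apply Rmult_le_pos; [apply weight_nonneg; auto|apply pos_INR].
      * intros l _.
        transitivity (mu l * lsum (sp (fun t => weight mu t * INR (gen t h)) (weight mu)) (cart (Tenum D H) l)).
        -- rewrite <- lsum_scal. apply lsum_ext. intros F HF. apply cart_length in HF.
           rewrite weight_Node, gen_NodeS, wprod_prodl, HF.
           rewrite <- sp_gen. ring.
        -- rewrite lsum_cart_sp. ring.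
Qed.

Lemma bernoulli_down x n : 0 <= x <= 1 -> 1 - INR n * (1 - x) <= x ^ n.
Proof.
  intros Hx. induction n. simpl; lra.
  rewrite S_INR. simpl. assert (0 <= x ^ n) by (apply pow_le; lra).
  assert (x * (1 - INR n * (1 - x)) <= x * x ^ n) by (apply Rmult_le_compat_l; lra).
  pose proof (pos_INR n).
  assert (0 <= INR n * (1 - x) * (1 - x)) by (apply Rmult_le_pos; [apply Rmult_le_pos|]; lra).
  nra.
Qed.

Lemma Y_bound mu D m : (1 <= D)%nat -> (forall k, 0 <= mu k) -> 0 <= m < 1 ->
  lsum mu (seq 0 D) <= 1 -> lsum (fun l => INR l * mu l) (seq 0 D) <= m ->
  forall H, lsum (fun t => weight mu t * INR (tsize t)) (Tenum D H) <= 1 / (1 - m).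
Proof.
  intros HD Hmu Hm HS0 HS1 H.
  assert (HB : 1 <= 1 / (1 - m)). { apply Rmult_le_reg_r with (1 - m). lra. field_simplify; lra. }
  induction H as [|H IH].
  - cbn [Tenum]. rewrite lsum_cons, lsum_nil, weight_Node, tsize_Node. simpl (length _). simpl (wprod _ _).
    simpl fsize. simpl INR. pose proof (lsum_seq_first mu D HD Hmu). lra.
  - rewrite Tenum_sum.
    set (U := lsum (weight mu) (Tenum D H)).
    set (Y := lsum (fun t => weight mu t * INR (tsize t)) (Tenum D H)) in *.
    assert (HU0 : 0 <= U) by apply U_nonneg, Hmu.
    assert (HU1 : U <= 1) by (apply U_le1; auto).
    assert (HY0 : 0 <= Y) by (apply lsum_nonneg; intros; apply Rmult_le_pos; [apply weight_nonneg; auto|apply pos_INR]).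
    rewrite (lsum_ext _ (fun l => mu l * (U ^ l + INR l * U ^ pred l * Y))).
    + eapply Rle_trans. apply lsum_le. intros l _.
      apply Rmult_le_compat_l. auto.
      assert (U ^ l <= 1) by (rewrite <- (pow1 l); apply pow_le_mono; auto).
      assert (U ^ pred l <= 1) by (rewrite <- (pow1 (pred l)); apply pow_le_mono; auto).
      assert (INR l * U ^ pred l * Y <= INR l * Y).
      { pose proof (pos_INR l). pose proof (pow_le U (pred l) HU0).
        rewrite Rmult_assoc. apply Rmult_le_compat_l; auto.
        rewrite <- (Rmult_1_l Y) at 2. apply Rmult_le_compat_r; auto. }
      apply (Rplus_le_compat _ _ _ _ H0 H2).
      rewrite (lsum_ext _ (fun l => mu l + Y * (INR l * mu l))) by (intros; ring).
      rewrite lsum_plus, lsum_scal.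
      assert (Y * lsum (fun l => INR l * mu l) (seq 0 D) <= (1/(1-m)) * m).
      { apply Rmult_le_compat; auto. apply lsum_nonneg; intros; apply Rmult_le_pos; auto; apply pos_INR. }
      assert (1 + 1 / (1 - m) * m = 1 / (1 - m)) by (field; lra). lra.
    + intros l _.
      transitivity (mu l * (lsum (prodl (weight mu)) (cart (Tenum D H) l) + lsum (sp (fun t => weight mu t * INR (tsize t)) (weight mu)) (cart (Tenum D H) l))).
      * rewrite <- lsum_plus, <- lsum_scal. apply lsum_ext. intros F HF. apply cart_length in HF.
        rewrite weight_Node, tsize_Node, wprod_prodl, HF, <- sp_size, S_INR. ring.
      * rewrite lsum_cart_prod, lsum_cart_sp. fold U Y. ring.
Qed.

Lemma U_lower mu D m s : (1 <= D)%nat -> (forall k, 0 <= mu k) -> 0 <= m < 1 -> 0 <= s ->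
  lsum mu (seq 0 D) <= 1 -> 1 - s <= lsum mu (seq 0 D) -> lsum (fun l => INR l * mu l) (seq 0 D) <= m ->
  forall H, 1 - lsum (weight mu) (Tenum D H) <= s / (1 - m) + m ^ H.
Proof.
  intros HD Hmu Hm Hs HS0 HS0' HS1 H.
  induction H as [|H IH].
  - cbn [Tenum]. rewrite lsum_cons, lsum_nil, weight_Node. simpl (length _). simpl (wprod _ _).
    assert (0 <= s / (1 - m)) by (unfold Rdiv; apply Rmult_le_pos; [lra|left; apply Rinv_0_lt_compat; lra]). pose proof (Hmu O). simpl. lra.
  - rewrite Tenum_sum.
    set (U := lsum (weight mu) (Tenum D H)) in *.
    assert (HU0 : 0 <= U) by apply U_nonneg, Hmu.
    assert (HU1 : U <= 1) by (apply U_le1; auto).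
    rewrite (lsum_ext _ (fun l => mu l * U ^ l)).
    + assert (lsum (fun l => mu l - (1 - U) * (INR l * mu l)) (seq 0 D) <= lsum (fun l => mu l * U ^ l) (seq 0 D)).
      { apply lsum_le. intros l _. pose proof (bernoulli_down U l (conj HU0 HU1)). pose proof (Hmu l). nra. }
      rewrite lsum_minus, lsum_scal in H0.
      assert ((1 - U) * lsum (fun l => INR l * mu l) (seq 0 D) <= (1 - U) * m) by (apply Rmult_le_compat_l; lra).
      assert (s / (1 - m) + m ^ S H = s + m * (s / (1 - m) + m ^ H)) by (simpl; field; lra).
      assert (m * (1 - U) <= m * (s / (1 - m) + m ^ H)) by (apply Rmult_le_compat_l; lra).
      lra.
    + intros l _. unfold U. rewrite <- lsum_cart_prod, <- lsum_scal. apply lsum_ext. intros F HF.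
      apply cart_length in HF. rewrite weight_Node, wprod_prodl, HF. reflexivity.
Qed.

Lemma Psize_lsum mu n : Defs.Psize mu n = lsum (weight mu) (trees n).
Proof. unfold Psize. apply fold_Rplus_map. Qed.

Lemma trees_gen_bound mu n m h : (1 <= n)%nat -> (forall k, 0 <= mu k) -> 0 <= m ->
  lsum mu (seq 0 n) <= 1 -> lsum (fun l => INR l * mu l) (seq 0 n) <= m ->
  lsum (fun t => weight mu t * INR (gen t h)) (trees n) <= m ^ h.
Proof.
  intros Hn Hmu Hm H0 H1. eapply Rle_trans; [|apply (G_bound mu n m Hn Hmu Hm H0 H1 n h)].
  apply lsum_incl. apply trees_NoDup.
  - intros t Ht _. apply trees_sound in Ht. apply Tenum_complete.
    pose proof (height_lt_size t); lia. pose proof (maxdeg_lt_size t); lia.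
  - intros; apply Rmult_le_pos; [apply weight_nonneg; auto|apply pos_INR].
  - intros; lra.
  - intros; apply Rmult_le_pos; [apply weight_nonneg; auto|apply pos_INR].
Qed.

Lemma trees_bulk_bound mu n Kd z u : (1 <= Kd)%nat -> (forall k, 0 <= mu k) -> 0 < z -> 0 <= u ->
  z * lsum (fun l => mu l * u ^ l) (seq 0 Kd) <= u ->
  lsum (fun t => if lt_dec (maxdeg t) Kd then weight mu t else 0) (trees n) * z ^ n <= u.
Proof.
  intros HK Hmu Hz Hu Hfix. eapply Rle_trans; [|apply (Tenum_gf mu Kd z u HK Hmu Hz Hu Hfix n)].
  rewrite Rmult_comm, <- lsum_scal.
  rewrite (lsum_ext _ (fun t => if lt_dec (maxdeg t) Kd then weight mu t * z ^ tsize t else 0)).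
  apply lsum_incl. apply trees_NoDup.
  - intros t Ht Hne. apply trees_sound in Ht. destruct (lt_dec (maxdeg t) Kd).
    apply Tenum_complete; auto. pose proof (height_lt_size t); lia. elim Hne; ring.
  - intros t. destruct (lt_dec (maxdeg t) Kd). apply Rmult_le_pos. apply weight_nonneg; auto. apply pow_le; lra. lra.
  - intros t _. destruct (lt_dec (maxdeg t) Kd). lra. apply Rmult_le_pos. apply weight_nonneg; auto. apply pow_le; lra.
  - intros t. apply Rmult_le_pos. apply weight_nonneg; auto. apply pow_le; lra.
  - intros t Ht. apply trees_sound in Ht. subst. destruct (lt_dec (maxdeg t) (Kd)); ring.
Qed.

Lemma trees_incl_family mu n (L : list ptree) : NoDup L -> (forall k, 0 <= mu k) ->
  lsum (fun t => if Nat.eq_dec (tsize t) n then weight mu t else 0) L <= lsum (weight mu) (trees n).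
Proof.
  intros HN Hmu. apply lsum_incl; auto.
  - intros t _ Hne. destruct (Nat.eq_dec (tsize t) n). subst. apply trees_complete. elim Hne; auto.
  - intros t; destruct (Nat.eq_dec (tsize t) n); [apply weight_nonneg; auto|lra].
  - intros t Ht. apply trees_sound in Ht. destruct (Nat.eq_dec (tsize t) n); [lra|contradiction].
  - intros; apply weight_nonneg; auto.
Qed.

Lemma lsum_const {A} c (L : list A) : lsum (fun _ => c) L = INR (length L) * c.
Proof. induction L. simpl; ring. rewrite lsum_cons, IHL. simpl length. rewrite S_INR. ring. Qed.

Lemma lsum_lt {A} (f g : A -> R) x L : (forall y, In y (x :: L) -> f y < g y) -> lsum f (x :: L) < lsum g (x :: L).
Proof.
  revert x. induction L; intros x H. rewrite !lsum_cons, !lsum_nil. assert (f x < g x) by (apply H; simpl; auto). lra.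
  rewrite (lsum_cons f), (lsum_cons g). assert (f x < g x) by (apply H; simpl; auto).
  assert (lsum f (a :: L) < lsum g (a :: L)) by (apply IHL; intros; apply H; simpl in *; tauto). lra.
Qed.

Lemma pigeon (c : nat -> R) B T : T <= lsum c (seq 0 (S B)) ->
  exists n, (n <= B)%nat /\ T / INR (S B) <= c n.
Proof.
  intros HS. destruct (classic (exists n, (n <= B)%nat /\ T / INR (S B) <= c n)) as [H|H]; auto.
  exfalso. assert (lsum c (seq 0 (S B)) < lsum (fun _ => T / INR (S B)) (seq 0 (S B))).
  { simpl seq. apply lsum_lt. intros n Hn. change (In n (seq 0 (S B))) in Hn. apply in_seq in Hn.
    destruct (Rlt_le_dec (c n) (T / INR (S B))); auto.
    elim H. exists n; split; [lia|lra]. }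
  rewrite lsum_const, length_seq in H0.
  assert (INR (S B) * (T / INR (S B)) = T) by (field; apply not_0_INR; lia). lra.
Qed.

Lemma lsum_swap {A B} (F : A -> B -> R) (LA : list A) (LB : list B) :
  lsum (fun a => lsum (F a) LB) LA = lsum (fun b => lsum (fun a => F a b) LA) LB.
Proof.
  induction LA. rewrite lsum_nil. rewrite (lsum_ext _ (fun _ => 0)) by (intros; reflexivity). rewrite lsum_const; simpl; ring.
  rewrite lsum_cons, IHLA. rewrite <- lsum_plus. apply lsum_ext. intros. rewrite lsum_cons. ring.
Qed.

Lemma lsum_indic_seq (k : nat) (g : R) B :
  lsum (fun n => if Nat.eq_dec k n then g else 0) (seq 0 (S B)) = if le_dec k B then g else 0.
Proof.
  induction B. simpl seq. rewrite lsum_cons, lsum_nil. destruct (Nat.eq_dec k 0); destruct (le_dec k 0); try lia; ring.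
  rewrite seq_S, lsum_app, IHB, lsum_cons, lsum_nil. simpl (0 + S B)%nat.
  destruct (le_dec k B); destruct (Nat.eq_dec k (S B)); destruct (le_dec k (S B)); try lia; ring.
Qed.

Lemma split_by_size (sz : ptree -> nat) (g : ptree -> R) L B :
  lsum (fun n => lsum (fun t => if Nat.eq_dec (sz t) n then g t else 0) L) (seq 0 (S B)) =
  lsum (fun t => if le_dec (sz t) B then g t else 0) L.
Proof. rewrite lsum_swap. apply lsum_ext. intros. apply lsum_indic_seq. Qed.

Lemma fsize_ge_length F : (length F <= fsize F)%nat.
Proof. induction F; simpl; [lia|]. destruct a. rewrite tsize_Node. lia. Qed.

Lemma markov_forest mu D H K M0 m : (1 <= D)%nat -> (forall k, 0 <= mu k) -> 0 <= m < 1 ->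
  lsum mu (seq 0 D) <= 1 -> lsum (fun l => INR l * mu l) (seq 0 D) <= m ->
  lsum (weight mu) (Tenum D H) ^ K - INR K / ((1 - m) * INR (S M0)) <=
  lsum (fun F => if le_dec (fsize F) M0 then prodl (weight mu) F else 0) (cart (Tenum D H) K).
Proof.
  intros HD Hmu Hm HS0 HS1.
  set (U := lsum (weight mu) (Tenum D H)).
  set (Y := lsum (fun t => weight mu t * INR (tsize t)) (Tenum D H)).
  assert (HU0 : 0 <= U) by apply U_nonneg, Hmu.
  assert (HU1 : U <= 1) by (apply U_le1; auto).
  assert (HY0 : 0 <= Y) by (apply lsum_nonneg; intros; apply Rmult_le_pos; [apply weight_nonneg; auto|apply pos_INR]).
  assert (HY1 : Y <= 1 / (1 - m)) by (apply Y_bound; auto).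
  assert (HM : 0 < INR (S M0)) by (apply lt_0_INR; lia).
  eapply Rle_trans with (lsum (fun F => prodl (weight mu) F - / INR (S M0) * (INR (fsize F) * prodl (weight mu) F)) (cart (Tenum D H) K)).
  - rewrite lsum_minus, lsum_scal, lsum_cart_prod. fold U.
    rewrite (lsum_ext _ (sp (fun t => weight mu t * INR (tsize t)) (weight mu))) by (intros; apply sp_size).
    rewrite lsum_cart_sp. fold U Y.
    assert (U ^ pred K <= 1) by (rewrite <- (pow1 (pred K)); apply pow_le_mono; auto).
    assert (0 <= U ^ pred K) by (apply pow_le; auto).
    assert (INR K * U ^ pred K * Y <= INR K * 1 * (1 / (1 - m))).
    { apply Rmult_le_compat; auto. apply Rmult_le_pos; auto; apply pos_INR.
      apply Rmult_le_compat_l; auto; apply pos_INR. }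
    assert (/ INR (S M0) * (INR K * U ^ pred K * Y) <= / INR (S M0) * (INR K * 1 * (1 / (1 - m)))).
    { apply Rmult_le_compat_l; auto. left; apply Rinv_0_lt_compat; auto. }
    assert (/ INR (S M0) * (INR K * 1 * (1 / (1 - m))) = INR K / ((1 - m) * INR (S M0))) by (field; lra).
    lra.
  - apply lsum_le. intros F _.
    assert (Hp : 0 <= prodl (weight mu) F) by (apply prodl_nonneg; intros; apply weight_nonneg; auto).
    destruct (le_dec (fsize F) M0).
    + assert (0 <= / INR (S M0) * (INR (fsize F) * prodl (weight mu) F)).
      { apply Rmult_le_pos. left; apply Rinv_0_lt_compat; auto. apply Rmult_le_pos; auto; apply pos_INR. }
      lra.
    + assert (INR (S M0) <= INR (fsize F)) by (apply le_INR; lia).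
      assert (/ INR (S M0) * (INR (fsize F) * prodl (weight mu) F) = (INR (fsize F) / INR (S M0)) * prodl (weight mu) F) by (field; lra).
      assert (1 <= INR (fsize F) / INR (S M0)).
      { apply Rmult_le_reg_r with (INR (S M0)); auto. field_simplify; lra. }
      nra.
Qed.

Lemma lower_bound mu D H K M0 m : (1 <= D)%nat -> (forall k, 0 <= mu k) -> 0 <= m < 1 ->
  lsum mu (seq 0 D) <= 1 -> lsum (fun l => INR l * mu l) (seq 0 D) <= m ->
  let T := mu K * (lsum (weight mu) (Tenum D H) ^ K - INR K / ((1 - m) * INR (S M0))) in
  0 < T ->
  exists n, (S K <= n)%nat /\ (n <= S M0)%nat /\ T / INR (S (S M0)) <= Defs.Psize mu n.
Proof.
  intros HD Hmu Hm HS0 HS1 T HT.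
  set (fam := map Node (cart (Tenum D H) K)).
  assert (HN : NoDup fam).
  { apply NoDup_map_inj. intros x y E; injection E; auto. apply cart_NoDup, Tenum_NoDup. }
  set (c := fun n => lsum (fun t => if Nat.eq_dec (tsize t) n then weight mu t else 0) fam).
  assert (HTc : T <= lsum c (seq 0 (S (S M0)))).
  { unfold c. rewrite split_by_size. unfold fam. rewrite lsum_map.
    unfold T. rewrite <- (lsum_ext (fun F => mu K * (if le_dec (fsize F) M0 then prodl (weight mu) F else 0))).
    rewrite lsum_scal. apply Rmult_le_compat_l; auto. apply markov_forest; auto.
    intros F HF. apply cart_length in HF. rewrite tsize_Node, weight_Node, wprod_prodl, HF.
    destruct (le_dec (fsize F) M0); destruct (le_dec (S (fsize F)) (S M0)); try lia; ring. }
  destruct (pigeon c (S M0) T HTc) as [n [Hn Hc]].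
  assert (HTp : 0 < T / INR (S (S M0))) by (apply Rdiv_lt_0_compat; auto; apply lt_0_INR; lia).
  exists n. split; [|split; auto].
  - destruct (le_lt_dec (S K) n) as [|Hlt]; auto. exfalso.
    assert (c n = 0).
    { unfold c, fam. rewrite lsum_map. rewrite (lsum_ext _ (fun _ => 0)). rewrite lsum_const; ring.
      intros F HF. apply cart_length in HF. rewrite tsize_Node.
      destruct (Nat.eq_dec (S (fsize F)) n); auto. pose proof (fsize_ge_length F). lia. }
    lra.
  - eapply Rle_trans. apply Hc. rewrite Psize_lsum. apply trees_incl_family; auto.
Qed.

Definition cc (i : nat) : R := (/2) ^ (S i).
Definition pp (K : nat -> nat) (i : nat) : R := cc i / INR (K i).
Definition muK (K : nat -> nat) (A : R) (k : nat) : R :=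
  (if Nat.eqb k 0 then 1 - A else 0) + lsum (fun i => if Nat.eqb (K i) k then pp K i else 0) (seq 0 k).

Definition Kok (K : nat -> nat) := (2 <= K 0)%nat /\ forall i, (K i < K (S i))%nat.

Lemma Kmono K : Kok K -> forall i j, (i < j)%nat -> (K i < K j)%nat.
Proof. intros [H0 HS] i j Hij. induction Hij. apply HS. specialize (HS m). lia. Qed.
Lemma Kmono_iff K : Kok K -> forall i j, (K i < K j)%nat <-> (i < j)%nat.
Proof. intros HK i j. split; intros H. destruct (le_lt_dec j i); auto. destruct (Nat.eq_dec i j). subst; lia.
  assert (K j < K i)%nat by (apply Kmono; auto; lia). lia. apply Kmono; auto. Qed.
Lemma Kge K : Kok K -> forall i, (i + 2 <= K i)%nat.
Proof. intros [H0 HS] i. induction i. lia. specialize (HS i). lia. Qed.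

Lemma cc_pos i : 0 < cc i. Proof. unfold cc. apply pow_lt. lra. Qed.
Lemma pp_pos K i : Kok K -> 0 < pp K i.
Proof. intros HK. unfold pp. apply Rdiv_lt_0_compat. apply cc_pos. apply lt_0_INR. pose proof (Kge K HK i). lia. Qed.
Lemma pp_K K i : Kok K -> pp K i * INR (K i) = cc i.
Proof. intros HK. unfold pp. field. apply not_0_INR. pose proof (Kge K HK i). lia. Qed.

Lemma lsum_cc a n : lsum cc (seq a n) = (/2) ^ a - (/2) ^ (a + n).
Proof. revert a. induction n; intros a. simpl. rewrite Nat.add_0_r. ring.
  simpl seq. rewrite lsum_cons, IHn. unfold cc. replace (a + S n)%nat with (S a + n)%nat by lia. simpl. field. Qed.

Lemma lsum_indic (a : nat) (g : nat -> R) D :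
  lsum (fun k => if Nat.eqb a k then g k else 0) (seq 0 D) = if lt_dec a D then g a else 0.
Proof.
  induction D. simpl. destruct (lt_dec a 0); [lia|reflexivity].
  rewrite seq_S, lsum_app, IHD, lsum_cons, lsum_nil. simpl (0 + D)%nat.
  destruct (lt_dec a D); destruct (Nat.eqb a D) eqn:E; destruct (lt_dec a (S D)).
  all: try rewrite Nat.eqb_eq in E; try rewrite Nat.eqb_neq in E; try lia; try (subst; ring); try ring.
Qed.

Lemma seq_split a b c : (b <= c)%nat -> seq a c = seq a b ++ seq (a + b) (c - b).
Proof. intros H. replace c with (b + (c - b))%nat at 1 by lia. apply seq_app. Qed.

Lemma lsum_seq_trunc (g : nat -> R) k D : (k <= D)%nat -> (forall i, (k <= i < D)%nat -> g i = 0) ->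
  lsum g (seq 0 D) = lsum g (seq 0 k).
Proof. intros H Hz. rewrite (seq_split 0 k D H), lsum_app.
  assert (lsum g (seq (0 + k) (D - k)) = 0).
  { rewrite (lsum_ext g (fun _ => 0)). rewrite lsum_const. ring.
    intros i Hi. apply in_seq in Hi. apply Hz. lia. }
  rewrite H0. ring. Qed.

Lemma mu_reindex K A (phi : nat -> R) D : Kok K ->
  lsum (fun k => muK K A k * phi k) (seq 0 D) =
  (if lt_dec 0 D then (1 - A) * phi O else 0) +
  lsum (fun i => if lt_dec (K i) D then pp K i * phi (K i) else 0) (seq 0 D).
Proof.
  intros HK. unfold muK.
  rewrite (lsum_ext _ (fun k => (if Nat.eqb 0 k then (1 - A) * phi k else 0) +
     lsum (fun i => if Nat.eqb (K i) k then pp K i * phi k else 0) (seq 0 D))).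
  - rewrite lsum_plus, lsum_indic. f_equal.
    rewrite lsum_swap. apply lsum_ext. intros i _. rewrite lsum_indic. reflexivity.
  - intros k Hk. apply in_seq in Hk. rewrite Rmult_plus_distr_r. f_equal.
    destruct k; simpl; ring.
    rewrite Rmult_comm, <- lsum_scal.
    rewrite (lsum_seq_trunc (fun i => if Nat.eqb (K i) k then pp K i * phi k else 0) k D) by
      (try lia; intros i Hi; pose proof (Kge K HK i); destruct (Nat.eqb (K i) k) eqn:E; auto;
       apply Nat.eqb_eq in E; lia).
    apply lsum_ext. intros i _. destruct (Nat.eqb (K i) k); ring.
Qed.

Lemma cut_sum K (g : nat -> R) D J : (J <= D)%nat -> (forall i, (i < D)%nat -> ((K i < D)%nat <-> (i < J)%nat)) ->
  lsum (fun i => if lt_dec (K i) D then g i else 0) (seq 0 D) = lsum g (seq 0 J).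
Proof.
  intros HJ Hc. rewrite (lsum_seq_trunc _ J D HJ).
  - apply lsum_ext. intros i Hi. apply in_seq in Hi. destruct (lt_dec (K i) D); auto.
    exfalso. apply n. apply Hc; lia.
  - intros i Hi. destruct (lt_dec (K i) D); auto. apply (Hc i) in l; lia.
Qed.

Lemma lsum_pp_le K A n : Kok K -> Un_cv (fun N => sum_f_R0 (pp K) N) A -> lsum (pp K) (seq 0 n) <= A.
Proof.
  intros HK HA. destruct n. simpl. assert (0 <= sum_f_R0 (pp K) 0). simpl. left; apply pp_pos; auto.
  pose proof (sum_incr (pp K) 0 A HA (fun i => Rlt_le _ _ (pp_pos K i HK))). lra.
  replace (lsum (pp K) (seq 0 (S n))) with (sum_f_R0 (pp K) n).
  apply sum_incr; auto. intros; left; apply pp_pos; auto.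
  clear. induction n. simpl. unfold lsum; simpl; ring. rewrite seq_S, lsum_app. simpl. rewrite IHn.
  unfold lsum; simpl. ring.
Qed.

Lemma sum_f_lsum g N : sum_f_R0 g N = lsum g (seq 0 (S N)).
Proof. induction N. simpl. unfold lsum; simpl; ring. rewrite seq_S, lsum_app. simpl. rewrite IHN.
  unfold lsum; simpl. ring. Qed.

Lemma lim_le_bound (u : nat -> R) l M : Un_cv u l -> (forall n, u n <= M) -> l <= M.
Proof.
  intros Hu HM. destruct (Rle_lt_dec l M) as [|Hlt]; auto. exfalso.
  destruct (Hu (l - M)) as [N HN]. lra. specialize (HN N (le_n _)). specialize (HM N).
  unfold Rdist in HN. apply Rabs_def2 in HN. lra.
Qed.

Lemma pp_le_half K i : Kok K -> pp K i <= cc i / 2.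
Proof. intros HK. unfold pp. pose proof (cc_pos i). assert (2 <= INR (K i)) by (replace 2 with (INR 2) by (simpl; ring); apply le_INR; pose proof (Kge K HK i); lia).
  apply Rmult_le_compat_l; [lra|]. apply Rinv_le_contravar; lra. Qed.

Lemma A_le_half K A : Kok K -> Un_cv (fun N => sum_f_R0 (pp K) N) A -> A <= /2.
Proof.
  intros HK HA. apply (lim_le_bound _ _ _ HA). intros N. rewrite sum_f_lsum.
  eapply Rle_trans. apply lsum_le. intros i _. apply (pp_le_half K i HK).
  rewrite (lsum_ext _ (fun i => /2 * cc i)) by (intros; unfold Rdiv; ring).
  rewrite lsum_scal, lsum_cc. simpl. pose proof (pow_lt (/2) (S N) ltac:(lra)). simpl in H. lra.
Qed.

Lemma A_nonneg K A : Kok K -> Un_cv (fun N => sum_f_R0 (pp K) N) A -> 0 <= A.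
Proof. intros HK HA. pose proof (lsum_pp_le K A 0 HK HA). simpl in H. auto. Qed.

Lemma muK_nonneg K A : Kok K -> Un_cv (fun N => sum_f_R0 (pp K) N) A -> forall k, 0 <= muK K A k.
Proof.
  intros HK HA k. unfold muK. pose proof (A_le_half K A HK HA).
  assert (0 <= lsum (fun i => if Nat.eqb (K i) k then pp K i else 0) (seq 0 k)).
  { apply lsum_nonneg. intros i _. destruct (Nat.eqb (K i) k); [left; apply pp_pos; auto|lra]. }
  destruct (Nat.eqb k 0); lra.
Qed.

Lemma cut_le K (g : nat -> R) D : (forall i, 0 <= g i) ->
  lsum (fun i => if lt_dec (K i) D then g i else 0) (seq 0 D) <= lsum g (seq 0 D).
Proof. intros Hg. apply lsum_le. intros i _. destruct (lt_dec (K i) D); [lra|auto]. Qed.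

Lemma cut_ge K (g : nat -> R) D J : (forall i, 0 <= g i) -> (J <= D)%nat -> (forall i, (i < J)%nat -> (K i < D)%nat) ->
  lsum g (seq 0 J) <= lsum (fun i => if lt_dec (K i) D then g i else 0) (seq 0 D).
Proof.
  intros Hg HJ Hc. rewrite (seq_split 0 J D HJ), lsum_app.
  assert (0 <= lsum (fun i => if lt_dec (K i) D then g i else 0) (seq (0 + J) (D - J))).
  { apply lsum_nonneg. intros i _. destruct (lt_dec (K i) D); [auto|lra]. }
  assert (lsum g (seq 0 J) = lsum (fun i => if lt_dec (K i) D then g i else 0) (seq 0 J)).
  { apply lsum_ext. intros i Hi. apply in_seq in Hi. destruct (lt_dec (K i) D); auto. elim n. apply Hc; lia. }
  lra.
Qed.

Lemma mu_sum_le1 K A D : Kok K -> Un_cv (fun N => sum_f_R0 (pp K) N) A -> lsum (muK K A) (seq 0 D) <= 1.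
Proof.
  intros HK HA. rewrite (lsum_ext _ (fun k => muK K A k * 1)) by (intros; ring).
  rewrite mu_reindex; auto.
  pose proof (A_le_half K A HK HA). pose proof (lsum_pp_le K A D HK HA).
  assert (lsum (fun i => if lt_dec (K i) D then pp K i * 1 else 0) (seq 0 D) <= lsum (pp K) (seq 0 D)).
  { eapply Rle_trans. apply cut_le. intros; rewrite Rmult_1_r; left; apply pp_pos; auto.
    rewrite (lsum_ext _ (pp K)) by (intros; ring). lra. }
  destruct (lt_dec 0 D); lra.
Qed.

Lemma cut_cond_mid K j D : Kok K -> (K j < D <= K (S j))%nat ->
  (S j <= D)%nat /\ forall i, (i < D)%nat -> ((K i < D)%nat <-> (i < S j)%nat).
Proof.
  intros HK HD. split. pose proof (Kge K HK j). lia.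
  intros i Hi. split; intros H.
  - destruct (le_lt_dec (S j) i); auto. destruct (Nat.eq_dec i (S j)). subst; lia.
    assert (K (S j) < K i)%nat by (apply Kmono; auto; lia). lia.
  - destruct (Nat.eq_dec i j). subst; lia. assert (K i < K j)%nat by (apply Kmono; auto; lia). lia.
Qed.

Lemma mean_mid K A j D : Kok K -> (K j < D <= K (S j))%nat ->
  lsum (fun k => INR k * muK K A k) (seq 0 D) = 1 - (/2) ^ (S j).
Proof.
  intros HK HD. destruct (cut_cond_mid K j D HK HD) as [HJ Hc].
  rewrite (lsum_ext _ (fun k => muK K A k * INR k)) by (intros; ring).
  rewrite mu_reindex; auto. rewrite (cut_sum K _ D (S j) HJ Hc).
  rewrite (lsum_ext _ cc) by (intros; apply pp_K; auto).
  rewrite lsum_cc. simpl INR. destruct (lt_dec 0 D); simpl; ring.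
Qed.

Lemma mass_mid K A j D : Kok K -> (K j < D <= K (S j))%nat ->
  lsum (muK K A) (seq 0 D) = (1 - A) + lsum (pp K) (seq 0 (S j)).
Proof.
  intros HK HD. destruct (cut_cond_mid K j D HK HD) as [HJ Hc].
  rewrite (lsum_ext _ (fun k => muK K A k * 1)) by (intros; ring).
  rewrite mu_reindex; auto. rewrite (cut_sum K _ D (S j) HJ Hc).
  rewrite (lsum_ext _ (pp K)) by (intros; ring).
  destruct (lt_dec 0 D). ring. lia.
Qed.

Lemma bulk_sum K A j u : Kok K -> (1 <= j)%nat ->
  lsum (fun l => muK K A l * u ^ l) (seq 0 (K j)) = (1 - A) + lsum (fun i => pp K i * u ^ (K i)) (seq 0 j).
Proof.
  intros HK Hj. rewrite mu_reindex; auto.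
  rewrite (cut_sum K _ (K j) j). destruct (lt_dec 0 (K j)). simpl; ring. pose proof (Kge K HK j); lia.
  pose proof (Kge K HK j); lia. intros i _. apply Kmono_iff; auto.
Qed.

Lemma tail_bound K A j : Kok K -> Un_cv (fun N => sum_f_R0 (pp K) N) A ->
  A <= lsum (pp K) (seq 0 (S j)) + (/2) ^ (S j) / INR (K (S j)).
Proof.
  intros HK HA. apply (lim_le_bound _ _ _ HA). intros N. rewrite sum_f_lsum.
  assert (HKp : 0 < INR (K (S j))) by (apply lt_0_INR; pose proof (Kge K HK (S j)); lia).
  assert (0 <= (/2) ^ (S j) / INR (K (S j))) by (unfold Rdiv; apply Rmult_le_pos; [apply pow_le; lra|left; apply Rinv_0_lt_compat; auto]).
  destruct (le_lt_dec (S N) (S j)).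
  - rewrite (seq_split 0 (S N) (S j) l), lsum_app.
    assert (0 <= lsum (pp K) (seq (0 + S N) (S j - S N))) by (apply lsum_nonneg; intros; left; apply pp_pos; auto).
    lra.
  - rewrite (seq_split 0 (S j) (S N)) by lia. rewrite lsum_app. simpl (0 + S j)%nat.
    assert (lsum (pp K) (seq (S j) (S N - S j)) <= (/2) ^ (S j) / INR (K (S j))).
    { eapply Rle_trans. apply lsum_le with (g := fun i => / INR (K (S j)) * cc i).
      - intros i Hi. apply in_seq in Hi. unfold pp. rewrite Rmult_comm. unfold Rdiv.
        apply Rmult_le_compat_l. left; apply cc_pos. apply Rinv_le_contravar; auto.
        apply le_INR. destruct (Nat.eq_dec i (S j)). subst; lia. pose proof (Kmono K HK (S j) i). lia.
      - rewrite lsum_scal, lsum_cc. unfold Rdiv. rewrite Rmult_comm. apply Rmult_le_compat_r.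
        left; apply Rinv_0_lt_compat; auto. pose proof (pow_le (/2) (S j + (S N - S j)) ltac:(lra)). lra. }
    lra.
Qed.

Lemma critical_muK K A : Kok K -> Un_cv (fun N => sum_f_R0 (pp K) N) A -> critical_offspring (muK K A).
Proof.
  intros HK HA. split; [|split].
  - apply muK_nonneg; auto.
  - intros eps Heps. destruct (HA eps Heps) as [N0 HN0]. exists (K N0). intros n Hn.
    rewrite sum_f_lsum. rewrite (lsum_ext _ (fun k => muK K A k * 1)) by (intros; ring).
    rewrite mu_reindex; auto. destruct (lt_dec 0 (S n)); [|lia].
    assert (H1 : lsum (fun i => if lt_dec (K i) (S n) then pp K i * 1 else 0) (seq 0 (S n)) <= A).
    { eapply Rle_trans. apply cut_le. intros; rewrite Rmult_1_r; left; apply pp_pos; auto.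
      rewrite (lsum_ext _ (pp K)) by (intros; ring). apply lsum_pp_le; auto. }
    assert (H2 : lsum (fun i => pp K i * 1) (seq 0 (S N0)) <= lsum (fun i => if lt_dec (K i) (S n) then pp K i * 1 else 0) (seq 0 (S n))).
    { apply cut_ge. intros; rewrite Rmult_1_r; left; apply pp_pos; auto. pose proof (Kge K HK N0); lia.
      intros i Hi. destruct (Nat.eq_dec i N0). subst; lia. pose proof (Kmono K HK i N0). lia. }
    rewrite (lsum_ext _ (pp K)) in H2 by (intros; ring). rewrite <- sum_f_lsum in H2.
    specialize (HN0 N0 (le_n _)). unfold Rdist in *. apply Rabs_def2 in HN0.
    apply Rabs_def1; lra.
  - intros eps Heps. destruct (pow_lt_1_zero (/2) ltac:(rewrite Rabs_pos_eq; lra) eps Heps) as [J HJ].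
    exists (K J). intros n Hn. rewrite sum_f_lsum.
    rewrite (lsum_ext _ (fun k => muK K A k * INR k)) by (intros; ring).
    rewrite mu_reindex; auto. destruct (lt_dec 0 (S n)); [|lia]. simpl INR. rewrite Rmult_0_r, Rplus_0_l.
    rewrite (lsum_ext _ (fun i => if lt_dec (K i) (S n) then cc i else 0)) by (intros; destruct (lt_dec (K x) (S n)); auto; apply pp_K; auto).
    assert (H1 : lsum (fun i => if lt_dec (K i) (S n) then cc i else 0) (seq 0 (S n)) <= 1).
    { eapply Rle_trans. apply cut_le. intros; left; apply cc_pos. rewrite lsum_cc. simpl. pose proof (pow_lt (/2) (S n) ltac:(lra)). simpl in H. lra. }
    assert (H2 : lsum cc (seq 0 J) <= lsum (fun i => if lt_dec (K i) (S n) then cc i else 0) (seq 0 (S n))).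
    { apply cut_ge. intros; left; apply cc_pos. pose proof (Kge K HK J); lia.
      intros i Hi. pose proof (Kmono K HK i J Hi). lia. }
    rewrite lsum_cc, Nat.add_0_l, pow_O in H2. specialize (HJ J (le_n _)). rewrite Rabs_pos_eq in HJ by (apply pow_le; lra).
    unfold Rdist. apply Rabs_def1. all: lra.
Qed.

Lemma exp_le_mono x y : x <= y -> exp x <= exp y.
Proof. intros [H|H]. left; apply exp_increasing; auto. subst; lra. Qed.

Lemma floor_nat x : 0 <= x -> exists h : nat, INR h <= x < INR h + 1.
Proof.
  intros Hx. destruct (archimed x) as [H1 H2].
  assert (Hz : (0 < up x)%Z) by (apply lt_IZR; lra).
  exists (Z.to_nat (up x - 1)). rewrite INR_IZR_INZ, Z2Nat.id by lia.
  rewrite minus_IZR. simpl. lra.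
Qed.

Lemma nat_above c : exists N : nat, c <= INR N.
Proof.
  destruct (floor_nat (Rmax c 0)) as [h Hh]. apply Rmax_r.
  exists (S h). rewrite S_INR. pose proof (Rmax_l c 0). lra.
Qed.

Lemma one_minus_exp d : 0 < d -> 1 - d <= exp (- d).
Proof. intros Hd. pose proof (exp_ineq1 (- d) ltac:(lra)). lra. Qed.

Lemma exp_pow_nat x h : exp x ^ h = exp (x * INR h).
Proof. induction h. simpl. rewrite Rmult_0_r, exp_0. reflexivity.
  rewrite S_INR. simpl. rewrite IHh, <- exp_plus. f_equal. ring. Qed.

Lemma pow_exp_bound d h : 0 < d < 1 -> (1 - d) ^ h <= exp (- (d * INR h)).
Proof.
  intros Hd. eapply Rle_trans. apply pow_le_mono with (y := exp (- d)). lra. apply one_minus_exp; lra.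
  rewrite exp_pow_nat. right. f_equal. ring.
Qed.

Lemma exp_ln_pow n k : (1 <= n)%nat -> exp (INR k * ln (INR n)) = INR n ^ k.
Proof. intros Hn. rewrite <- ln_pow. apply exp_ln. apply pow_lt. apply lt_0_INR; lia. apply lt_0_INR; lia. Qed.

Lemma height_numeric d n (fn : R) h0 : 0 < d < 1 -> (1 <= n)%nat -> 4 / d <= fn ->
  fn * ln (INR n) < INR h0 + 1 -> (1 - d) ^ h0 <= 3 / INR n ^ 4.
Proof.
  intros Hd Hn Hf Hh. eapply Rle_trans. apply pow_exp_bound; auto.
  assert (Hl : 0 <= ln (INR n)). { rewrite <- ln_1. destruct (Nat.eq_dec n 1). subst. simpl. lra.
    left. apply ln_increasing. lra. apply lt_1_INR. lia. }
  assert (H4 : 4 <= d * fn). { apply Rmult_le_reg_r with (/ d). apply Rinv_0_lt_compat; lra.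
    replace (d * fn * / d) with fn by (field; lra). unfold Rdiv in Hf. lra. }
  assert (- (d * INR h0) <= d + - (INR 4 * ln (INR n))).
  { assert (d * (fn * ln (INR n)) < d * (INR h0 + 1)) by (apply Rmult_lt_compat_l; lra).
    assert (4 * ln (INR n) <= d * fn * ln (INR n)) by (apply Rmult_le_compat_r; lra).
    simpl INR. replace (1 + 1 + 1 + 1) with 4 by ring. nra. }
  apply exp_le_mono in H. eapply Rle_trans. apply H.
  rewrite exp_plus, exp_Ropp, exp_ln_pow by auto.
  assert (exp d <= 3). { eapply Rle_trans; [|apply exp_le_3]. apply exp_le_mono. lra. }
  assert (0 < INR n ^ 4) by (apply pow_lt; apply lt_0_INR; lia).
  unfold Rdiv. apply Rmult_le_compat_r. left; apply Rinv_0_lt_compat; auto. auto.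
Qed.

Lemma bernoulli_up e y : 0 <= e -> 1 + INR y * e <= (1 + e) ^ y.
Proof. intros He. induction y. simpl; lra. rewrite S_INR. simpl.
  assert (0 <= INR y * e) by (apply Rmult_le_pos; auto; apply pos_INR). nra. Qed.

Lemma pow_dominates z C : 1 < z -> exists X0, forall x, (X0 <= x)%nat -> C * INR x ^ 2 <= z ^ x.
Proof.
  intros Hz. set (e := z - 1). assert (He : 0 < e) by (unfold e; lra).
  destruct (nat_above (729 * Rmax C 0 / e ^ 3)) as [N HN].
  exists (Nat.max 3 N). intros x Hx.
  set (y := (x / 3)%nat).
  assert (Hy : (3 * y <= x /\ x < 3 * y + 3)%nat).
  { unfold y. pose proof (Nat.div_mod x 3 ltac:(lia)). pose proof (Nat.mod_upper_bound x 3 ltac:(lia)). lia. }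
  assert (Hz1 : 1 <= z) by lra.
  assert (H1 : z ^ (3 * y) <= z ^ x) by (apply Rle_pow; auto; lia).
  assert (H2 : (INR y * e) ^ 3 <= z ^ (3 * y)).
  { rewrite Nat.mul_comm, pow_mult.
    apply pow_le_mono. apply Rmult_le_pos; [apply pos_INR|lra].
    pose proof (bernoulli_up e y (Rlt_le _ _ He)). replace (1 + e) with z in H by (unfold e; ring). lra. }
  assert (H3 : INR x <= 9 * INR y).
  { assert (INR x < 3 * INR y + 3). { replace 3 with (INR 3) by (simpl; ring). rewrite <- mult_INR, <- plus_INR. apply lt_INR. lia. }
    assert (1 <= INR y). { replace 1 with (INR 1) by reflexivity. apply le_INR. lia. } lra. }
  assert (Hx0 : 0 <= INR x) by apply pos_INR.
  assert (HxN : 729 * Rmax C 0 / e ^ 3 <= INR x) by (eapply Rle_trans; [apply HN|apply le_INR; lia]).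
  assert (He3 : 0 < e ^ 3) by (apply pow_lt; auto).
  assert (H4 : 729 * Rmax C 0 <= INR x * e ^ 3).
  { apply Rmult_le_reg_r with (/ e ^ 3). apply Rinv_0_lt_compat; auto.
    replace (INR x * e ^ 3 * / e ^ 3) with (INR x) by (field; lra). unfold Rdiv in HxN. lra. }
  assert (H5 : C * INR x ^ 2 <= (INR x * e / 9) ^ 3).
  { replace ((INR x * e / 9) ^ 3) with (INR x ^ 2 * (INR x * e ^ 3) / 729) by (simpl; field).
    pose proof (Rmax_l C 0). assert (0 <= INR x ^ 2) by (apply pow_le; auto).
    assert (C * INR x ^ 2 <= Rmax C 0 * INR x ^ 2) by (apply Rmult_le_compat_r; auto).
    assert (Rmax C 0 * INR x ^ 2 <= INR x ^ 2 * (INR x * e ^ 3) / 729).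
    { replace (INR x ^ 2 * (INR x * e ^ 3) / 729) with (INR x ^ 2 * ((INR x * e ^ 3) / 729)) by (field).
      rewrite Rmult_comm. apply Rmult_le_compat_l; auto. lra. }
    lra. }
  assert (H6 : (INR x * e / 9) ^ 3 <= (INR y * e) ^ 3).
  { apply pow_le_mono. apply Rmult_le_pos. apply Rmult_le_pos; lra. lra. nra. }
  lra.
Qed.

Lemma pow_upper y n : 0 <= y -> INR n * y <= / 2 -> (1 + y) ^ n <= 1 + INR n * y + 2 * (INR n * y) ^ 2.
Proof.
  intros Hy Hny. destruct n. simpl; lra.
  assert (Hy1 : y <= /2). { rewrite S_INR in Hny. pose proof (pos_INR n). nra. }
  set (t := INR (S n) * y) in *.
  assert (Hb : 1 - t <= (1 - y) ^ S n). { pose proof (bernoulli_down (1 - y) (S n)). unfold t. replace (1 - (1 - y)) with y in H by ring. apply H; lra. }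
  assert (Hp : (1 + y) ^ S n * (1 - y) ^ S n <= 1).
  { rewrite <- Rpow_mult_distr. eapply Rle_trans. apply pow_le_mono with (y := 1); nra. rewrite pow1; lra. }
  assert (Ht0 : 0 <= t) by (unfold t; apply Rmult_le_pos; auto; apply pos_INR).
  assert (Hq : 0 <= (1 + y) ^ S n) by (apply pow_le; lra).
  assert (H1 : (1 + y) ^ S n * (1 - t) <= 1).
  { eapply Rle_trans; [|apply Hp]. apply Rmult_le_compat_l; auto. }
  assert (H2 : 1 <= (1 + t + 2 * t ^ 2) * (1 - t)) by nra.
  assert (0 < 1 - t) by lra. nra.
Qed.

Lemma lsum_single_le (g : nat -> R) L i : (forall x, 0 <= g x) -> In i L -> g i <= lsum g L.
Proof. intros Hg. induction L; [simpl; tauto|]. rewrite lsum_cons. intros [->|H].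
  pose proof (lsum_nonneg g L (fun x _ => Hg x)). lra. specialize (IHL H). pose proof (Hg a). lra. Qed.

Lemma bulk_fix (kf : nat -> nat) j : (forall i, (i < j)%nat -> (1 <= kf i)%nat) ->
  exists z u, 1 < z /\ 0 <= u /\
    z * ((1 - lsum (pp kf) (seq 0 j)) + lsum (fun i => pp kf i * u ^ (kf i)) (seq 0 j)) <= u.
Proof.
  intros Hk.
  set (B := 1 + lsum (fun i => INR (kf i)) (seq 0 j)).
  assert (HB0 : 1 <= B). { unfold B. pose proof (lsum_nonneg (fun i => INR (kf i)) (seq 0 j) (fun i _ => pos_INR _)). lra. }
  assert (HKB : forall i, (i < j)%nat -> INR (kf i) <= B).
  { intros i Hi. unfold B. pose proof (lsum_single_le (fun i => INR (kf i)) (seq 0 j) i (fun _ => pos_INR _) ltac:(apply in_seq; lia)). simpl in H. lra. }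
  set (r := (/2) ^ j). assert (Hr : 0 < r <= 1). { unfold r. split. apply pow_lt; lra. rewrite <- (pow1 j). apply pow_le_mono; lra. }
  set (eta := r / (4 * B)). assert (Heta : 0 < eta) by (unfold eta; apply Rdiv_lt_0_compat; lra).
  set (G := 1 + eta * (1 - r / 2)).
  exists ((1 + eta) / G), (1 + eta).
  assert (HG : 1 <= G) by (unfold G; nra).
  split. { apply Rmult_lt_reg_r with G. lra. unfold Rdiv. rewrite Rmult_assoc, Rinv_l, Rmult_1_r by lra.
    unfold G. nra. }
  split. lra.
  assert (Hsum : lsum (fun i => pp kf i * (1 + eta) ^ (kf i)) (seq 0 j) <=
                 lsum (pp kf) (seq 0 j) + eta * (1 + r / 2) * lsum cc (seq 0 j)).
  { rewrite <- lsum_scal, <- lsum_plus. apply lsum_le. intros i Hi. apply in_seq in Hi.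
    assert (Hki : 1 <= INR (kf i)) by (replace 1 with (INR 1) by reflexivity; apply le_INR; apply Hk; lia).
    assert (Hke : INR (kf i) * eta <= r / 4).
    { unfold eta. replace (INR (kf i) * (r / (4 * B))) with ((r / 4) * (INR (kf i) / B)) by (field; lra).
      rewrite <- (Rmult_1_r (r / 4)) at 2. apply Rmult_le_compat_l. lra.
      apply Rmult_le_reg_r with B. lra. unfold Rdiv. rewrite Rmult_assoc, Rinv_l by lra. specialize (HKB i ltac:(lia)). lra. }
    assert (Hpu := pow_upper eta (kf i) (Rlt_le _ _ Heta) ltac:(lra)).
    assert (Hpp : 0 < pp kf i). { unfold pp. apply Rdiv_lt_0_compat. apply cc_pos. lra. }
    assert (HppK : pp kf i * INR (kf i) = cc i) by (unfold pp; field; lra).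
    eapply Rle_trans. apply Rmult_le_compat_l. lra. apply Hpu.
    assert (pp kf i * (1 + INR (kf i) * eta + 2 * (INR (kf i) * eta) ^ 2) =
            pp kf i + cc i * eta + 2 * cc i * eta * (INR (kf i) * eta)) by (rewrite <- HppK; ring).
    rewrite H. assert (2 * cc i * eta * (INR (kf i) * eta) <= 2 * cc i * eta * (r / 4)).
    { apply Rmult_le_compat_l; auto. pose proof (cc_pos i). nra. }
    assert (eta * (1 + r / 2) * cc i = cc i * eta + 2 * cc i * eta * (r / 4)) by field.
    lra. }
  rewrite lsum_cc in Hsum. rewrite Nat.add_0_l, pow_O in Hsum. fold r in Hsum.
  assert (Hg : (1 - lsum (pp kf) (seq 0 j)) + lsum (fun i => pp kf i * (1 + eta) ^ kf i) (seq 0 j) <= G).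
  { unfold G. assert (eta * (1 + r / 2) * (1 - r) <= eta * (1 - r / 2)).
    { rewrite Rmult_assoc. apply Rmult_le_compat_l. lra. nra. } lra. }
  assert (Hz0 : 0 < (1 + eta) / G) by (apply Rdiv_lt_0_compat; lra).
  eapply Rle_trans. apply Rmult_le_compat_l. lra. apply Hg.
  right. field. lra.
Qed.

Lemma gen_pos t d : (d <= height t)%nat -> (1 <= gen t d)%nat.
Proof.
  revert d. induction t as [ts IH] using ptree_ind2. intros [|d] Hd. rewrite gen_Node0; lia.
  rewrite gen_NodeS. rewrite height_Node in Hd. induction IH. simpl in Hd; lia.
  rewrite hmax_cons in Hd. rewrite gsum_cons.
  destruct (le_lt_dec d (height x)) as [Hle|Hlt]. specialize (H d Hle). lia.
  assert (S d <= hmax l)%nat by lia. specialize (IHIH H0). lia.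
Qed.

Lemma Pcond_bad mu n (P : ptree -> Prop) : 0 < Defs.Psize mu n ->
  Pcond mu n P = 1 - lsum (fun t => if excluded_middle_informative (P t) then 0 else weight mu t) (trees n) / Defs.Psize mu n.
Proof.
  intros Hp. unfold Pcond. rewrite fold_Rplus_map.
  assert (HH : lsum (fun t => if excluded_middle_informative (P t) then weight mu t else 0) (trees n) =
          Defs.Psize mu n - lsum (fun t => if excluded_middle_informative (P t) then 0 else weight mu t) (trees n)).
  { rewrite Psize_lsum, <- lsum_minus. apply lsum_ext. intros t _. destruct (excluded_middle_informative (P t)); ring. }
  rewrite HH. field. lra.
Qed.

Definition Spec (f : nat -> R) (kf : nat -> nat) (j x : nat) : Prop :=
  (4 * kf (pred j) * 2 ^ j + 2 <= x)%nat
  /\ (forall n, (x <= n)%nat -> 8 / (/2) ^ (S j) < f n)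
  /\ 72 * INR (S j) / ((/2) ^ (S j)) ^ 2 <= INR x ^ 2
  /\ exists z u, 1 < z /\ 0 <= u /\
       z * ((1 - lsum (pp kf) (seq 0 j)) + lsum (fun i => pp kf i * u ^ (kf i)) (seq 0 j)) <= u /\
       u * (24 * INR (S j) / ((/2) ^ (S j)) ^ 2) * INR x ^ 2 <= z ^ x.

Lemma Spec_ext f kf kf' j x : (1 <= j)%nat -> (forall i, (i < j)%nat -> kf i = kf' i) -> Spec f kf j x -> Spec f kf' j x.
Proof.
  intros Hj He [H1 [H2 [H3 [z [u [Hz [Hu [Hfix Hdom]]]]]]]].
  split. rewrite <- He by lia. auto. split; auto. split; auto. exists z, u. split; auto. split; auto. split; auto.
  assert (E1 : lsum (pp kf) (seq 0 j) = lsum (pp kf') (seq 0 j)).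
  { apply lsum_ext. intros i Hi; apply in_seq in Hi. unfold pp. rewrite He by lia. auto. }
  assert (E2 : lsum (fun i => pp kf i * u ^ kf i) (seq 0 j) = lsum (fun i => pp kf' i * u ^ kf' i) (seq 0 j)).
  { apply lsum_ext. intros i Hi; apply in_seq in Hi. unfold pp. rewrite He by lia. auto. }
  rewrite <- E1, <- E2. auto.
Qed.

Lemma Spec_exists f kf j : (forall M, exists N, forall n, (N <= n)%nat -> M < f n) ->
  (1 <= j)%nat -> (forall i, (i < j)%nat -> (1 <= kf i)%nat) -> exists x, Spec f kf j x.
Proof.
  intros f_inf Hj Hk.
  destruct (f_inf (8 / (/2) ^ (S j))) as [N1 HN1].
  destruct (nat_above (72 * INR (S j) / ((/2) ^ (S j)) ^ 2)) as [N2 HN2].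
  destruct (bulk_fix kf j Hk) as [z [u [Hz [Hu Hfix]]]].
  destruct (pow_dominates z (u * (24 * INR (S j) / ((/2) ^ (S j)) ^ 2)) Hz) as [N3 HN3].
  set (x := Nat.max (4 * kf (pred j) * 2 ^ j + 2) (Nat.max N1 (Nat.max (S N2) N3))).
  exists x. split; [|split; [|split]].
  - unfold x; lia.
  - intros n Hn. apply HN1. unfold x in Hn; lia.
  - eapply Rle_trans. apply HN2. assert (1 <= INR x) by (replace 1 with (INR 1) by reflexivity; apply le_INR; unfold x; lia).
    assert (INR N2 <= INR x) by (apply le_INR; unfold x; lia). simpl. nra.
  - exists z, u. repeat split; auto. apply HN3. unfold x; lia.
Qed.

Fixpoint Kfun (nx : (nat -> nat) -> nat -> nat) (j : nat) : nat -> nat :=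
  match j with O => fun _ => 2%nat
  | S j' => fun i => if Nat.leb i j' then Kfun nx j' i else nx (Kfun nx j') j end.
Definition KK nx (i : nat) : nat := Kfun nx i i.

Lemma Kfun_prefix nx j i : (i <= j)%nat -> Kfun nx j i = KK nx i.
Proof.
  induction j; intros Hi. assert (i = 0%nat) by lia. subst. reflexivity.
  destruct (Nat.eq_dec i (S j)). subst. reflexivity.
  simpl. destruct (Nat.leb i j) eqn:E. apply IHj. apply Nat.leb_le in E; auto.
  apply Nat.leb_gt in E. lia.
Qed.

Lemma KK_S nx j : KK nx (S j) = nx (Kfun nx j) (S j).
Proof. unfold KK. cbn [Kfun]. assert (E : Nat.leb (S j) j = false) by (apply Nat.leb_gt; lia). rewrite E. reflexivity. Qed.

Lemma KK_spec f nx : (forall kf j, (1 <= j)%nat -> (forall i, (i < j)%nat -> (1 <= kf i)%nat) -> Spec f kf j (nx kf j)) ->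
  forall j, (forall i, (i <= j)%nat -> (1 <= KK nx i)%nat) /\ ((1 <= j)%nat -> Spec f (KK nx) j (KK nx j)).
Proof.
  intros HNX j. induction j as [|j [IH1 IH2]].
  - split. intros i Hi. assert (i = 0%nat) by lia. subst. unfold KK; simpl; lia. lia.
  - assert (Hs : Spec f (KK nx) (S j) (KK nx (S j))).
    { rewrite KK_S. apply Spec_ext with (Kfun nx j). lia.
      intros i Hi. apply Kfun_prefix. lia.
      apply HNX. lia. intros i Hi. rewrite Kfun_prefix by lia. apply IH1; lia. }
    split; auto. intros i Hi. destruct (Nat.eq_dec i (S j)). subst.
    destruct Hs as [H1 _]. lia. apply IH1; lia.
Qed.

Lemma KK_ok f nx : (forall kf j, (1 <= j)%nat -> (forall i, (i < j)%nat -> (1 <= kf i)%nat) -> Spec f kf j (nx kf j)) ->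
  Kok (KK nx).
Proof.
  intros HNX. split. unfold KK; simpl; lia.
  intros i. destruct (KK_spec f nx HNX (S i)) as [_ H]. destruct (H ltac:(lia)) as [H1 _].
  simpl pred in H1. pose proof (Nat.pow_nonzero 2 (S i)). nia.
Qed.

Lemma muK_at K A j : Kok K -> muK K A (K j) = pp K j.
Proof.
  intros HK. unfold muK. assert (E : Nat.eqb (K j) 0 = false) by (apply Nat.eqb_neq; pose proof (Kge K HK j); lia).
  rewrite E, Rplus_0_l.
  rewrite (lsum_ext _ (fun i => if Nat.eqb j i then pp K i else 0)).
  rewrite lsum_indic. destruct (lt_dec j (K j)); auto. pose proof (Kge K HK j); lia.
  intros i _. destruct (Nat.eqb (K i) (K j)) eqn:E1; destruct (Nat.eqb j i) eqn:E2; auto.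
  - apply Nat.eqb_eq in E1. apply Nat.eqb_neq in E2. exfalso.
    destruct (lt_eq_lt_dec i j) as [[Hl|Hl]|Hl]. pose proof (Kmono K HK i j Hl); lia. lia. pose proof (Kmono K HK j i Hl); lia.
  - apply Nat.eqb_neq in E1. apply Nat.eqb_eq in E2. subst. lia.
Qed.

Lemma INR_pow2_delta j : INR (2 ^ j) * (/2) ^ j = 1.
Proof. rewrite pow_INR. simpl INR. rewrite <- Rpow_mult_distr. replace ((1 + 1) * / 2) with 1 by field. apply pow1. Qed.

Lemma stage (f : nat -> R) K A j : (forall n, 0 < f n) -> Kok K -> Un_cv (fun N => sum_f_R0 (pp K) N) A ->
  (1 <= j)%nat -> Spec f K j (K j) -> Spec f K (S j) (K (S j)) ->
  exists n, (K j < n)%nat /\ 0 < Defs.Psize (muK K A) n /\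
    1 - / INR (S j) <= Pcond (muK K A) n (fun t => INR (height t) < f n * ln (INR n)) /\
    1 - / INR (S j) <= Pcond (muK K A) n (fun t => INR n / f n < INR (width t)).
Proof.
  intros f_pos HK HA Hj [_ [F1 [Q [z [u [Hz [Hu [Hfix Hdom]]]]]]]] [G _].
  simpl pred in G.
  set (mu := muK K A).
  set (d := (/2) ^ (S j)).
  set (Kj := K j). set (D := K (S j)).
  assert (Hd : 0 < d < 1). { unfold d. split. apply pow_lt; lra. simpl. pose proof (pow_le (/2) j ltac:(lra)).
    assert ((/2) ^ j <= 1) by (rewrite <- (pow1 j); apply pow_le_mono; lra). nra. }
  assert (Hmu : forall k, 0 <= mu k) by (apply muK_nonneg; auto).
  assert (HKj2 : (2 <= Kj)%nat) by (pose proof (Kge K HK j); unfold Kj; lia).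
  assert (HKjD : (Kj < D)%nat) by (apply Kmono; auto).
  assert (HP2 : INR (2 ^ S j) = / d) by (pose proof (INR_pow2_delta (S j)); fold d in H; field_simplify; [|lra]; apply Rmult_eq_reg_r with d; [|lra]; field_simplify; lra).
  assert (Hmass : lsum mu (seq 0 D) = (1 - A) + lsum (pp K) (seq 0 (S j))) by (apply mass_mid; auto; unfold D, Kj in *; lia).
  assert (Hmean : lsum (fun l => INR l * mu l) (seq 0 D) = 1 - d) by (apply mean_mid; auto; unfold D, Kj in *; lia).
  set (s := A - lsum (pp K) (seq 0 (S j))).
  assert (Hs0 : 0 <= s) by (unfold s; pose proof (lsum_pp_le K A (S j) HK HA); lra).
  assert (HD0 : 0 < INR D) by (apply lt_0_INR; lia).
  assert (Hs1 : s <= d / INR D) by (unfold s, d, D; pose proof (tail_bound K A j HK HA); lra).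
  destruct (pow_lt_1_zero (1 - d) ltac:(rewrite Rabs_pos_eq; lra) (/ INR D) ltac:(apply Rinv_0_lt_compat; auto)) as [H HH].
  specialize (HH H (le_n _)). rewrite Rabs_pos_eq in HH by (apply pow_le; lra).
  assert (HD1 : (1 <= D)%nat) by lia.
  assert (HS0 : lsum mu (seq 0 D) <= 1) by (apply mu_sum_le1; auto).
  pose proof (U_lower mu D (1 - d) s HD1 Hmu ltac:(lra) Hs0 HS0 ltac:(unfold s; lra) ltac:(lra) H) as HUl.
  set (U := lsum (weight mu) (Tenum D H)) in *.
  assert (HU0 : 0 <= U) by apply U_nonneg, Hmu.
  assert (HU1 : U <= 1) by (apply U_le1; auto).
  assert (Hsd : s / (1 - (1 - d)) <= / INR D).
  { replace (1 - (1 - d)) with d by ring. apply Rmult_le_reg_r with d. lra.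
    unfold Rdiv. rewrite Rmult_assoc, Rinv_l, Rmult_1_r by lra.
    unfold Rdiv in Hs1. lra. }
  assert (H4K : 4 * INR Kj <= INR D).
  { replace 4 with (INR 4) by (simpl; ring). rewrite <- mult_INR. apply le_INR.
    pose proof (Nat.pow_nonzero 2 (S j)). unfold D, Kj. nia. }
  assert (HKjpos : 0 < INR Kj) by (apply lt_0_INR; lia).
  assert (HUK : / 2 <= U ^ Kj).
  { pose proof (bernoulli_down U Kj (conj HU0 HU1)).
    assert (INR Kj * (1 - U) <= INR Kj * (2 / INR D)).
    { apply Rmult_le_compat_l. lra. unfold Rdiv. lra. }
    assert (INR Kj * (2 / INR D) <= / 2).
    { apply Rmult_le_reg_r with (INR D); auto. unfold Rdiv. field_simplify; lra. }
    lra. }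
  set (M0 := (4 * Kj * 2 ^ S j)%nat).
  assert (HM0 : INR M0 = 4 * INR Kj / d).
  { unfold M0. rewrite !mult_INR, HP2. simpl INR. field. lra. }
  assert (HKM : INR Kj / ((1 - (1 - d)) * INR (S M0)) <= / 4).
  { rewrite S_INR, HM0. replace (1 - (1 - d)) with d by ring.
    replace (d * (4 * INR Kj / d + 1)) with (4 * INR Kj + d) by (field; lra).
    apply Rmult_le_reg_r with (4 * INR Kj + d). lra.
    unfold Rdiv. rewrite Rmult_assoc, Rinv_l, Rmult_1_r by lra. lra. }
  assert (Hpj : mu Kj = d / INR Kj) by (unfold mu, Kj; rewrite muK_at; auto).
  assert (Hpj0 : 0 < d / INR Kj) by (apply Rdiv_lt_0_compat; lra).
  set (T := mu Kj * (U ^ Kj - INR Kj / ((1 - (1 - d)) * INR (S M0)))).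
  assert (HT : d / INR Kj / 4 <= T).
  { unfold T. rewrite Hpj. replace (d / INR Kj / 4) with (d / INR Kj * / 4) by (field; lra).
    apply Rmult_le_compat_l. lra. lra. }
  assert (HT0 : 0 < T) by lra.
  destruct (lower_bound mu D H Kj M0 (1 - d) HD1 Hmu ltac:(lra) HS0 ltac:(lra) HT0) as [n [Hn1 [Hn2 HPn]]].
  fold U in HPn. fold T in HPn.
  set (L0 := d ^ 2 / (24 * INR Kj ^ 2)).
  assert (HL0 : 0 < L0) by (unfold L0; apply Rdiv_lt_0_compat; [apply pow_lt; lra| apply Rmult_lt_0_compat; [lra|apply pow_lt; lra]]).
  assert (HPL : L0 <= Defs.Psize mu n).
  { eapply Rle_trans; [|apply HPn].
    assert (HSS : INR (S (S M0)) <= 6 * INR Kj / d).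
    { rewrite !S_INR, HM0. assert (1 <= INR Kj / d).
      { apply Rmult_le_reg_r with d. lra. unfold Rdiv. rewrite Rmult_assoc, Rinv_l by lra. assert (2 <= INR Kj) by (replace 2 with (INR 2) by (simpl; ring); apply le_INR; lia). nra. }
      unfold Rdiv in *. lra. }
    assert (0 < INR (S (S M0))) by (apply lt_0_INR; lia).
    apply Rle_trans with ((d / INR Kj / 4) / (6 * INR Kj / d)).
    - right. unfold L0. field. lra.
    - unfold Rdiv at 2. unfold Rdiv at 3. apply Rmult_le_compat. apply Rlt_le, Rdiv_lt_0_compat; lra.
      left; apply Rinv_0_lt_compat. apply Rdiv_lt_0_compat; lra. auto.
      apply Rinv_le_contravar; auto. }
  assert (HnD : (n < D)%nat) by (unfold D; lia).
  assert (HnK : (Kj < n)%nat) by lia.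
  assert (Hn0 : 0 < INR n) by (apply lt_0_INR; lia).
  assert (HSj : 0 < INR (S j)) by (apply lt_0_INR; lia).
  assert (Hfn : 8 / d < f n) by (apply F1; unfold Kj in HnK; lia).
  exists n. split; [exact HnK|]. split; [lra|].
  assert (Hgen : forall B, 0 <= B -> B <= L0 / INR (S j) -> 1 - / INR (S j) <= 1 - B / Defs.Psize mu n).
  { intros B HB0 HB. assert (B / Defs.Psize mu n <= / INR (S j)).
    { apply Rmult_le_reg_r with (Defs.Psize mu n). lra. unfold Rdiv. rewrite Rmult_assoc, Rinv_l, Rmult_1_r by lra.
      eapply Rle_trans. apply HB. unfold Rdiv. rewrite Rmult_comm. apply Rmult_le_compat_l; auto.
      left; apply Rinv_0_lt_compat; auto. }
    lra. }
  split.
  -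
    rewrite Pcond_bad by lra. apply Hgen.
    + apply lsum_nonneg. intros t _. destruct (excluded_middle_informative _); [lra|apply weight_nonneg; auto].
    + assert (Hx : 0 <= f n * ln (INR n)).
      { apply Rmult_le_pos. left; auto. rewrite <- ln_1. destruct (Nat.eq_dec n 1). lia.
        left. apply ln_increasing. lra. apply lt_1_INR. lia. }
      destruct (floor_nat _ Hx) as [h0 [Hh1 Hh2]].
      eapply Rle_trans. apply lsum_le with (g := fun t => weight mu t * INR (gen t h0)).
      { intros t _. destruct (excluded_middle_informative _) as [Ha|Ha].
        apply Rmult_le_pos; [apply weight_nonneg; auto|apply pos_INR].
        assert (Hh : (h0 <= height t)%nat). { apply INR_le. apply Rnot_lt_le in Ha. lra. }
        pose proof (gen_pos t h0 Hh). assert (1 <= INR (gen t h0)) by (replace 1 with (INR 1) by reflexivity; apply le_INR; auto).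
        pose proof (weight_nonneg mu t Hmu). nra. }
      eapply Rle_trans. apply trees_gen_bound with (m := 1 - d); auto. lia. lra.
      apply mu_sum_le1; auto. right. apply mean_mid; auto. unfold D, Kj in *; lia.
      eapply Rle_trans. apply height_numeric with (fn := f n) (n := n). lra. lia.
      apply Rle_trans with (8 / d); [|lra]. unfold Rdiv. apply Rmult_le_compat_r. left; apply Rinv_0_lt_compat; lra. lra.
      exact Hh2.
      assert (HKn : INR Kj ^ 4 <= INR n ^ 4) by (apply pow_le_mono; [lra|apply le_INR; lia]).
      assert (HK4 : 0 < INR Kj ^ 4) by (apply pow_lt; lra).
      apply Rle_trans with (3 / INR Kj ^ 4).
      { unfold Rdiv. apply Rmult_le_compat_l. lra. apply Rinv_le_contravar; auto. }
      unfold L0. fold d in Q.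
      assert (Hd2 : 0 < d ^ 2) by (apply pow_lt; lra).
      assert (72 * INR (S j) <= INR Kj ^ 2 * d ^ 2).
      { apply Rmult_le_reg_r with (/ d ^ 2). apply Rinv_0_lt_compat; auto.
        replace (INR Kj ^ 2 * d ^ 2 * / d ^ 2) with (INR Kj ^ 2) by (field; lra). unfold Rdiv in Q. unfold Kj. lra. }
      apply Rmult_le_reg_r with (INR Kj ^ 4 * INR (S j) * 24). 
      apply Rmult_lt_0_compat; [apply Rmult_lt_0_compat|]; lra.
      field_simplify; try (split; lra); try lra.
  -
    rewrite Pcond_bad by lra. apply Hgen.
    + apply lsum_nonneg. intros t _. destruct (excluded_middle_informative _); [lra|apply weight_nonneg; auto].
    + assert (HnM : INR n <= INR (S M0)) by (apply le_INR; lia).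
      assert (Hratio : INR n / f n < INR Kj).
      { assert (Hf0 : 0 < f n) by auto.
        apply Rmult_lt_reg_r with (f n); auto. unfold Rdiv. rewrite Rmult_assoc, Rinv_l, Rmult_1_r by lra.
        rewrite S_INR, HM0 in HnM.
        assert (INR Kj * (8 / d) < INR Kj * f n) by (apply Rmult_lt_compat_l; lra).
        assert (4 * INR Kj / d + 1 < INR Kj * (8 / d)).
        { unfold Rdiv. assert (1 < / d) by (rewrite <- Rinv_1; apply Rinv_lt_contravar; lra).
          assert (2 <= INR Kj) by (replace 2 with (INR 2) by (simpl; ring); apply le_INR; lia).
          assert (2 <= INR Kj * / d) by nra. nra. }
        lra. }
      eapply Rle_trans. apply lsum_le with (g := fun t => if lt_dec (maxdeg t) Kj then weight mu t else 0).
      { intros t _. destruct (excluded_middle_informative _) as [Ha|Ha].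
        destruct (lt_dec (maxdeg t) Kj); [apply weight_nonneg; auto|lra].
        destruct (lt_dec (maxdeg t) Kj) as [|Hm]; [lra|]. exfalso. apply Hm.
        apply Rnot_lt_le in Ha. pose proof (maxdeg_le_width t). apply INR_lt.
        apply le_INR in H0. lra. }
      assert (Hz0 : 0 < z) by lra.
      assert (Hfix' : z * lsum (fun l => mu l * u ^ l) (seq 0 Kj) <= u).
      { unfold mu, Kj. rewrite bulk_sum; auto. eapply Rle_trans; [|apply Hfix].
        apply Rmult_le_compat_l. lra. pose proof (lsum_pp_le K A j HK HA). lra. }
      pose proof (trees_bulk_bound mu n Kj z u ltac:(lia) Hmu Hz0 Hu Hfix') as Hb.
      assert (Hzn : z ^ Kj <= z ^ n) by (apply Rle_pow; [lra|lia]).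
      assert (Hzk : 0 < z ^ Kj) by (apply pow_lt; lra).
      set (W := lsum (fun t => if lt_dec (maxdeg t) Kj then weight mu t else 0) (trees n)) in *.
      assert (HW0 : 0 <= W) by (apply lsum_nonneg; intros t _; destruct (lt_dec (maxdeg t) Kj); [apply weight_nonneg; auto|lra]).
      assert (HWz : W * z ^ Kj <= u) by (eapply Rle_trans; [|apply Hb]; apply Rmult_le_compat_l; auto).
      fold d in Hdom. fold Kj in Hdom.
      assert (Hd2 : 0 < d ^ 2) by (apply pow_lt; lra).
      apply Rmult_le_reg_r with (z ^ Kj); auto.
      eapply Rle_trans. apply HWz.
      unfold L0. apply Rmult_le_reg_r with (24 * INR (S j) / d ^ 2 * INR Kj ^ 2).
      apply Rmult_lt_0_compat. apply Rdiv_lt_0_compat; lra. apply pow_lt; lra.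
      replace (d ^ 2 / (24 * INR Kj ^ 2) / INR (S j) * z ^ Kj * (24 * INR (S j) / d ^ 2 * INR Kj ^ 2)) with (z ^ Kj) by (field; repeat split; lra).
      rewrite <- Rmult_assoc. auto.
Qed.

Theorem theorem2 (f : nat -> R)
  (f_pos : forall n, 0 < f n)
  (f_inf : forall M, exists N, forall n, (N <= n)%nat -> M < f n) :
  exists mu : nat -> R,
    critical_offspring mu /\
    limsup_one mu (fun n t => INR (height t) < f n * ln (INR n)) /\
    limsup_one mu (fun n t => INR n / f n < INR (width t)).
Proof.
  assert (Hex : forall kf j, exists x, (1 <= j)%nat -> (forall i, (i < j)%nat -> (1 <= kf i)%nat) -> Spec f kf j x).
  { intros kf j. destruct (classic ((1 <= j)%nat /\ (forall i, (i < j)%nat -> (1 <= kf i)%nat))) as [[H1 H2]|Hn].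
    - destruct (Spec_exists f kf j f_inf H1 H2) as [x Hx]. exists x; auto.
    - exists 0%nat. intros H1 H2. elim Hn; auto. }
  set (nx := fun kf j => proj1_sig (constructive_indefinite_description _ (Hex kf j))).
  assert (HNX : forall kf j, (1 <= j)%nat -> (forall i, (i < j)%nat -> (1 <= kf i)%nat) -> Spec f kf j (nx kf j)).
  { intros kf j. unfold nx. destruct (constructive_indefinite_description _ (Hex kf j)) as [x Hx]. simpl. auto. }
  set (K := KK nx).
  assert (HK : Kok K) by (apply (KK_ok f nx HNX)).
  assert (Hgrow : Un_growing (fun N => sum_f_R0 (pp K) N)).
  { intros N. simpl. pose proof (pp_pos K (S N) HK). lra. }
  assert (Hub : has_ub (fun N => sum_f_R0 (pp K) N)).
  { exists 1. intros x [N ->]. rewrite sum_f_lsum.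
    eapply Rle_trans. apply lsum_le. intros i _. apply (pp_le_half K i HK).
    rewrite (lsum_ext _ (fun i => /2 * cc i)) by (intros; unfold Rdiv; ring).
    rewrite lsum_scal, lsum_cc. simpl. pose proof (pow_lt (/2) (S N) ltac:(lra)). simpl in H. lra. }
  destruct (growing_cv _ Hgrow Hub) as [A HA].
  exists (muK K A).
  assert (Hspec : forall j, (1 <= j)%nat -> Spec f K j (K j)).
  { intros j Hj. destruct (KK_spec f nx HNX j) as [_ H]. apply H; auto. }
  assert (Hst := fun j (Hj : (1 <= j)%nat) => stage f K A j f_pos HK HA Hj (Hspec j Hj) (Hspec (S j) ltac:(lia))).
  assert (Hpick : forall eps N, 0 < eps -> exists j, (1 <= j)%nat /\ (N <= j)%nat /\ / INR (S j) < eps).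
  { intros eps N Heps. destruct (nat_above (/ eps)) as [J HJ]. exists (S (Nat.max N J)). split; [lia|split; [lia|]].
    assert (INR J + 1 <= INR (S (S (Nat.max N J)))) by (rewrite <- S_INR; apply le_INR; lia).
    assert (0 < / eps) by (apply Rinv_0_lt_compat; auto).
    rewrite <- (Rinv_inv eps). apply Rinv_lt_contravar. apply Rmult_lt_0_compat; [lra|apply lt_0_INR; lia]. lra. }
  assert (HN : forall N, exists n, (N <= n)%nat /\ 0 < Defs.Psize (muK K A) n).
  { intros N. destruct (Hst (S N) ltac:(lia)) as [n [Hn [Hp _]]]. exists n. split; auto.
    pose proof (Kge K HK (S N)). lia. }
  split; [apply critical_muK; auto|split].
  - split; auto. intros eps Heps N. destruct (Hpick eps N Heps) as [j [Hj1 [Hj2 Hj3]]].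
    destruct (Hst j Hj1) as [n [Hn [Hp [Hh _]]]]. exists n. split. pose proof (Kge K HK j). lia.
    split; auto. lra.
  - split; auto. intros eps Heps N. destruct (Hpick eps N Heps) as [j [Hj1 [Hj2 Hj3]]].
    destruct (Hst j Hj1) as [n [Hn [Hp [_ Hw]]]]. exists n. split. pose proof (Kge K HK j). lia.
    split; auto. lra.
Qed.
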